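(* Let $0<\beta<2$, $d\in\mathbb{N}$, $\kappa\in\mathbb{R}$ and $N\in(0,\infty)$. Suppose that \[\frac1N(\mathcal{L}u(x))^2\le \Gamma_2(u)(x)+\kappa\,\Gamma(u)(x)\] holds for all $u\in C_c^\infty(\mathbb{R}^d)$ and all $x\in\mathbb{R}^d$ (i.e. $\mathcal{L}$ satisfies $CD(\kappa,N)$). Then \[\frac1N(\mathcal{L}u(x))^2\le \Gamma_2(u)(x)\] for all $u\in C_c^\infty(\mathbb{R}^d)$ and all $x\in\mathbb{R}^d$, i.e. $\mathcal{L}$ satisfies $CD(0,N)$.
   Context: $c_{\beta,d}=\frac{2^\beta\Gamma(\frac{d+\beta}{2})}{\pi^{d/2}|\Gamma(-\frac{\beta}{2})|}$; $\mathcal{L}u(x)=c_{\beta,d}\int_{\mathbb{R}^d}\frac{u(x+h)-2u(x)+u(x-h)}{|h|^{d+\beta}}dh$; $\Gamma(u)(x)=c_{\beta,d}\int_{\mathbb{R}^d}\frac{(u(x+h)-u(x))^2}{|h|^{d+\beta}}dh$; $\Gamma_2(u)(x)=c_{\beta,d}^2\int_{\mathbb{R}^d}\int_{\mathbb{R}^d}\frac{[u(x+h+\sigma)-u(x+h)-u(x+\sigma)+u(x)]^2}{|h|^{d+\beta}|\sigma|^{d+\beta}}dh\,d\sigma$. *)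

(* Defs.v *)
From Stdlib Require Import Reals Lra List Classical ClassicalEpsilon.
Open Scope R_scope.

(* Points of R^d are encoded as  v : nat -> R  of which only the
   coordinates 0 .. d-1 are relevant. Functions on R^d are functions
   (nat -> R) -> R that depend only on the first d coordinates. *)

Definition vadd (x h : nat -> R) : nat -> R := fun i => x i + h i.
Definition vsub (x h : nat -> R) : nat -> R := fun i => x i - h i.

Fixpoint sum_upto (d : nat) (f : nat -> R) : R :=
  match d with O => 0 | S k => sum_upto k f + f k end.
Fixpoint prod_upto (d : nat) (f : nat -> R) : R :=
  match d with O => 1 | S k => prod_upto k f * f k end.

Definition vnorm (d : nat) (h : nat -> R) : R :=
  sqrt (sum_upto d (fun i => h i ^ 2)).

(* defined as the supremum of the integrals of nonnegative step functions
   (finite sums of multiples of indicators of closed boxes) lying below f. *)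

Definition Rleb (a b : R) : bool := if Rle_dec a b then true else false.

Fixpoint in_boxb (d : nat) (a b x : nat -> R) : bool :=
  match d with
  | O => true
  | S k => in_boxb k a b x && Rleb (a k) (x k) && Rleb (x k) (b k)
  end.

Definition box_vol (d : nat) (a b : nat -> R) : R :=
  prod_upto d (fun i => b i - a i).

Definition step := (R * (nat -> R) * (nat -> R))%type.

Fixpoint step_val (d : nat) (l : list step) (x : nat -> R) : R :=
  match l with
  | nil => 0
  | (c, a, b) :: l' => (if in_boxb d a b x then c else 0) + step_val d l' x
  end.

Fixpoint step_int (d : nat) (l : list step) : R :=
  match l with
  | nil => 0
  | (c, a, b) :: l' => c * box_vol d a b + step_int d l'
  end.

Definition step_ok (d : nat) (f : (nat -> R) -> R) (l : list step) : Prop :=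
  Forall (fun p : step => let '(c, a, b) := p in
            0 <= c /\ forall i, (i < d)%nat -> a i <= b i) l
  /\ forall x, step_val d l x <= f x.

Definition lower_sums (d : nat) (f : (nat -> R) -> R) : R -> Prop :=
  fun v => exists l, step_ok d f l /\ v = step_int d l.

Definition lint (d : nat) (f : (nat -> R) -> R) : R :=
  epsilon (inhabits 0) (fun v => is_lub (lower_sums d f) v).

Definition Rint (d : nat) (f : (nat -> R) -> R) : R :=
  lint d (fun h => Rmax (f h) 0) - lint d (fun h => Rmax (- f h) 0).

Definition Gamma_pos (s : R) : R :=
  lint 1 (fun v => if Rlt_dec 0 (v 0%nat)
                   then Rpower (v 0%nat) (s - 1) * exp (- v 0%nat) else 0).

(* Gamma on (0,oo) and, via Gamma(s) = Gamma(s+1)/s, on (-1,0) *)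
Definition EGamma (s : R) : R :=
  if Rlt_dec 0 s then Gamma_pos s else Gamma_pos (s + 1) / s.

Definition cbd (beta : R) (d : nat) : R :=
  Rpower 2 beta * EGamma ((INR d + beta) / 2)
  / (Rpower PI (INR d / 2) * Rabs (EGamma (- beta / 2))).

Definition depends_first (d : nat) (u : (nat -> R) -> R) : Prop :=
  forall x y, (forall i, (i < d)%nat -> x i = y i) -> u x = u y.

Definition contd (d : nat) (u : (nat -> R) -> R) : Prop :=
  forall x eps, 0 < eps -> exists del, 0 < del /\
    forall y, vnorm d (vsub y x) < del -> Rabs (u y - u x) < eps.

Definition setc (x : nat -> R) (i : nat) (t : R) : nat -> R :=
  fun j => if Nat.eqb j i then t else x j.

Fixpoint Cn (d n : nat) (u : (nat -> R) -> R) : Prop :=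
  contd d u /\
  match n with
  | O => True
  | S m => exists Du : nat -> (nat -> R) -> R,
      (forall i x, (i < d)%nat ->
         derivable_pt_lim (fun t => u (setc x i t)) (x i) (Du i x))
      /\ forall i, (i < d)%nat -> Cn d m (Du i)
  end.

Definition Ccinf (d : nat) (u : (nat -> R) -> R) : Prop :=
  depends_first d u /\ (forall n, Cn d n u) /\
  exists R0, forall x, R0 < vnorm d x -> u x = 0.

Definition Lop (d : nat) (beta : R) (u : (nat -> R) -> R) (x : nat -> R) : R :=
  cbd beta d * Rint d (fun h =>
    (u (vadd x h) - 2 * u x + u (vsub x h)) / Rpower (vnorm d h) (INR d + beta)).

Definition GammaOp (d : nat) (beta : R) (u : (nat -> R) -> R) (x : nat -> R) : R :=
  cbd beta d * lint d (fun h =>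
    (u (vadd x h) - u x) ^ 2 / Rpower (vnorm d h) (INR d + beta)).

(* on R^(2d): w = (h, sigma) with h i = w i, sigma i = w (d + i) *)
Definition Gamma2Op (d : nat) (beta : R) (u : (nat -> R) -> R) (x : nat -> R) : R :=
  cbd beta d ^ 2 * lint (d + d) (fun w =>
    let h := w in let s := fun i => w (d + i)%nat in
    (u (vadd (vadd x h) s) - u (vadd x h) - u (vadd x s) + u x) ^ 2
    / (Rpower (vnorm d h) (INR d + beta) * Rpower (vnorm d s) (INR d + beta))).

(* Main.v *)
Require Import Defs.
From Stdlib Require Import Reals Lra Lia List Classical ClassicalEpsilon FunctionalExtensionality PropExtensionality.
From Coquelicot Require Import Coquelicot.
Open Scope R_scope.


Definition trip := (R*R*R)%type.

Definition ind (a b t : R) : R :=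
  if Rle_dec a t then if Rle_dec t b then 1 else 0 else 0.

Fixpoint s1 (l : list trip) (t : R) : R :=
  match l with nil => 0 | (c,a,b)::l' => c * ind a b t + s1 l' t end.
Fixpoint tot1 (l : list trip) : R :=
  match l with nil => 0 | (c,a,b)::l' => c * (b - a) + tot1 l' end.
Fixpoint pos1 (l : list trip) : R :=
  match l with nil => 0 | (c,a,b)::l' => c * (Rmax b 0 - Rmax a 0) + pos1 l' end.
Fixpoint csum (l : list trip) : R :=
  match l with nil => 0 | (c,a,b)::l' => c + csum l' end.
Fixpoint bsum (l : list trip) : R :=
  match l with nil => 0 | (c,a,b)::l' => Rabs b + bsum l' end.
Fixpoint lensum (l : list trip) (L R0 : R) : R :=
  match l with nil => 0 | (c,a,b)::l' =>
    c * Rmax 0 (Rmin b R0 - Rmax a L) + lensum l' L R0 end.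

Lemma is_RInt_constR (c L R0 : R) : is_RInt (fun _ => c) L R0 ((R0 - L) * c).
Proof. exact (is_RInt_const L R0 c). Qed.

Lemma is_RInt_zero (L R0 : R) : is_RInt (fun _ => 0) L R0 0.
Proof. assert (H := is_RInt_constR 0 L R0). rewrite Rmult_0_r in H. exact H. Qed.

Lemma is_RInt_ChaslesR (f : R -> R) a b c l1 l2 :
  is_RInt f a b l1 -> is_RInt f b c l2 -> is_RInt f a c (l1 + l2).
Proof. intros H1 H2. exact (is_RInt_Chasles f a b c l1 l2 H1 H2). Qed.

Lemma is_RInt_ind a b L R0 : a < b -> L <= R0 ->
  is_RInt (ind a b) L R0 (Rmax 0 (Rmin b R0 - Rmax a L)).
Proof.
  intros Hab HLR.
  set (lo := Rmax a L). set (hi := Rmin b R0).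
  assert (Hlo1 : a <= lo) by apply Rmax_l.
  assert (Hlo2 : L <= lo) by apply Rmax_r.
  assert (Hhi1 : hi <= b) by apply Rmin_l.
  assert (Hhi2 : hi <= R0) by apply Rmin_r.
  destruct (Rle_dec hi lo) as [Hle|Hlt].
  - rewrite Rmax_left by lra.
    apply is_RInt_ext with (fun _ => 0).
    + intros t Ht. rewrite Rmin_left in Ht by lra. rewrite Rmax_right in Ht by lra.
      unfold ind. destruct (Rle_dec a t); [|reflexivity].
      destruct (Rle_dec t b); [|reflexivity].
      exfalso. unfold lo, hi in *.
      unfold Rmax, Rmin in *.
      destruct (Rle_dec a L); destruct (Rle_dec b R0); lra.
    + apply is_RInt_zero.
  - apply Rnot_le_lt in Hlt.
    rewrite Rmax_right by lra.
    replace (hi - lo) with ((0 + (hi - lo)) + 0) by ring.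
    apply is_RInt_ChaslesR with hi.
    apply is_RInt_ChaslesR with lo.
    + apply is_RInt_ext with (fun _ => 0).
      * intros t Ht. rewrite Rmin_left in Ht by lra. rewrite Rmax_right in Ht by lra.
        unfold ind. destruct (Rle_dec a t); [|reflexivity].
        exfalso. unfold lo in *. unfold Rmax in *. destruct (Rle_dec a L); lra.
      * apply is_RInt_zero.
    + apply is_RInt_ext with (fun _ => 1).
      * intros t Ht. rewrite Rmin_left in Ht by lra. rewrite Rmax_right in Ht by lra.
        unfold ind. destruct (Rle_dec a t); [|lra].
        destruct (Rle_dec t b); lra.
      * assert (H := is_RInt_constR 1 lo hi). rewrite Rmult_1_r in H. exact H.
    + apply is_RInt_ext with (fun _ => 0).
      * intros t Ht. rewrite Rmin_left in Ht by lra. rewrite Rmax_right in Ht by lra.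
        unfold ind. destruct (Rle_dec a t); [|reflexivity].
        destruct (Rle_dec t b); [|reflexivity].
        exfalso. unfold hi in *. unfold Rmin in *. destruct (Rle_dec b R0); lra.
      * apply is_RInt_zero.
Qed.

Lemma is_RInt_s1 l L R0 : List.Forall (fun p : trip => let '(c,a,b) := p in (a < b)) l ->
  L <= R0 -> is_RInt (s1 l) L R0 (lensum l L R0).
Proof.
  induction l as [|[[c a] b] l IH]; intros HF HLR; simpl.
  - apply is_RInt_ext with (fun _ => 0).
    + intros; reflexivity.
    + apply is_RInt_zero.
  - inversion HF; subst.
    apply (is_RInt_plus (fun t => c * ind a b t) (s1 l)).
    + apply (is_RInt_scal (ind a b) L R0 c). apply is_RInt_ind; auto.
    + apply IH; auto.
Qed.

Lemma pos1_le l e R0 : 0 < e -> (forall p, In p l -> let '(c,a,b) := p in 0 <= c /\ b <= R0) ->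
  pos1 l <= lensum l e R0 + e * csum l.
Proof.
  induction l as [|[[c a] b] l IH]; intros He Hl; simpl; [lra|].
  assert (H1 := Hl (c,a,b) (or_introl eq_refl)). simpl in H1. destruct H1 as [Hc HbR].
  assert (IH' : pos1 l <= lensum l e R0 + e * csum l).
  { apply IH; auto. intros p Hp; apply Hl; right; auto. }
  assert (Hk : Rmax b 0 - Rmax a 0 <= Rmax 0 (Rmin b R0 - Rmax a e) + e).
  { rewrite Rmin_left by lra.
    unfold Rmax. destruct (Rle_dec b 0); destruct (Rle_dec a 0);
    destruct (Rle_dec a e); destruct (Rle_dec 0 (b - a)); destruct (Rle_dec 0 (b - e)); lra. }
  assert (c * (Rmax b 0 - Rmax a 0) <= c * (Rmax 0 (Rmin b R0 - Rmax a e) + e)).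
  { apply Rmult_le_compat_l; auto. }
  lra.
Qed.

Lemma csum_ge0 l : (forall p, In p l -> let '(c,a,b) := p in 0 <= c) -> 0 <= csum l.
Proof.
  induction l as [|[[c a] b] l IH]; intros Hl; simpl; [lra|].
  assert (H1 := Hl (c,a,b) (or_introl eq_refl)). simpl in H1.
  assert (0 <= csum l) by (apply IH; intros p Hp; apply Hl; right; auto). lra.
Qed.

Lemma bsum_ge l : forall p, In p l -> let '(c,a,b) := p in (b <= bsum l).
Proof.
  induction l as [|[[c a] b] l IH]; intros p Hp; simpl in *; [contradiction|].
  assert (0 <= bsum l).
  { clear. induction l as [|[[c a] b] l IH]; simpl; [lra|]. pose proof (Rabs_pos b). lra. }
  destruct Hp as [<-|Hp].
  - pose proof (Rle_abs b). lra.
  - specialize (IH p Hp). destruct p as [[c' a'] b']. pose proof (Rabs_pos b). lra.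
Qed.

Lemma half1 (M J : R) (phi : R -> R) l : 0 <= M ->
  List.Forall (fun p : trip => let '(c,a,b) := p in 0 <= c /\ a < b) l ->
  (forall t, 0 < t -> s1 l t <= M * phi t) ->
  (forall e R0, 0 < e <= R0 -> exists I, is_RInt phi e R0 I /\ I <= J) ->
  pos1 l <= M * J.
Proof.
  intros HM HF Hs Hphi.
  assert (Hin : forall p, In p l -> let '(c,a,b) := p in 0 <= c /\ a < b).
  { intros p Hp. rewrite List.Forall_forall in HF. apply HF; auto. }
  assert (HF' : List.Forall (fun p : trip => let '(c,a,b) := p in (a < b)) l).
  { rewrite List.Forall_forall. intros [[c a] b] Hp. apply (Hin _ Hp). }
  assert (HS : 0 <= csum l).
  { apply csum_ge0. intros [[c a] b] Hp. apply (Hin _ Hp). }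
  assert (Key : forall e, 0 < e <= 1 -> pos1 l <= M * J + e * csum l).
  { intros e He.
    set (R0 := 1 + bsum l).
    assert (0 <= bsum l).
    { clear. induction l as [|[[c a] b] l IH]; simpl; [lra|]. pose proof (Rabs_pos b). lra. }
    destruct (Hphi e R0) as [I [HI HIJ]]. { unfold R0; lra. }
    assert (H1 : lensum l e R0 <= M * I).
    { apply (is_RInt_le (s1 l) (fun t => M * phi t) e R0).
      - unfold R0; lra.
      - apply is_RInt_s1; auto. unfold R0; lra.
      - apply (is_RInt_scal phi e R0 M I). auto.
      - intros t Ht. apply Hs. lra. }
    assert (H2 : pos1 l <= lensum l e R0 + e * csum l).
    { apply pos1_le; [lra|]. intros [[c a] b] Hp. split.
      - apply (Hin _ Hp).
      - pose proof (bsum_ge l _ Hp). simpl in H0. unfold R0. lra. }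
    assert (M * I <= M * J) by (apply Rmult_le_compat_l; auto).
    lra. }
  destruct (Rle_dec (pos1 l) (M * J)) as [H|H]; auto.
  exfalso. apply Rnot_le_lt in H.
  destruct (Req_dec (csum l) 0) as [H0|H0].
  - specialize (Key 1). rewrite H0 in Key. lra.
  - set (e := Rmin 1 ((pos1 l - M * J) / (2 * csum l))).
    assert (0 < (pos1 l - M * J) / (2 * csum l)).
    { apply Rdiv_lt_0_compat; lra. }
    assert (He : 0 < e <= 1).
    { unfold e. split. apply Rmin_glb_lt; lra. apply Rmin_l. }
    specialize (Key e He).
    assert (e * csum l <= (pos1 l - M * J) / 2).
    { assert (e <= (pos1 l - M * J) / (2 * csum l)) by apply Rmin_r.
      apply Rmult_le_compat_r with (r := csum l) in H2; auto.
      replace ((pos1 l - M * J) / (2 * csum l) * csum l) with ((pos1 l - M * J) / 2) in H2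
        by (field; lra). lra. }
    lra.
Qed.

Definition ndeg (p : trip) : bool := let '(c,a,b) := p in if Rlt_dec a b then true else false.
Definition refl1 (p : trip) : trip := let '(c,a,b) := p in (c, -b, -a).

Lemma ind_ge0 a b t : 0 <= ind a b t.
Proof. unfold ind. destruct (Rle_dec a t); destruct (Rle_dec t b); lra. Qed.

Lemma tot1_filter l : List.Forall (fun p : trip => let '(c,a,b) := p in 0 <= c /\ a <= b) l ->
  tot1 l = tot1 (filter ndeg l).
Proof.
  induction l as [|[[c a] b] l IH]; intros HF; simpl; [reflexivity|].
  inversion HF; subst. destruct H1.
  destruct (Rlt_dec a b); simpl; rewrite IH; auto.
  assert (a = b) by lra. subst. ring.
Qed.

Lemma s1_filter l t : List.Forall (fun p : trip => let '(c,a,b) := p in 0 <= c /\ a <= b) l ->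
  s1 (filter ndeg l) t <= s1 l t.
Proof.
  induction l as [|[[c a] b] l IH]; intros HF; simpl; [lra|].
  inversion HF; subst. destruct H1. specialize (IH H2).
  pose proof (ind_ge0 a b t).
  assert (0 <= c * ind a b t) by (apply Rmult_le_pos; auto).
  destruct (Rlt_dec a b); simpl; lra.
Qed.

Lemma tot1_split l : tot1 l = pos1 l + pos1 (map refl1 l).
Proof.
  induction l as [|[[c a] b] l IH]; simpl; [ring|]. rewrite IH.
  assert (Rmax b 0 - Rmax a 0 + (Rmax (- a) 0 - Rmax (- b) 0) = b - a).
  { unfold Rmax. destruct (Rle_dec b 0); destruct (Rle_dec a 0);
    destruct (Rle_dec (-a) 0); destruct (Rle_dec (-b) 0); lra. }
  nra.
Qed.

Lemma s1_refl l t : s1 (map refl1 l) t = s1 l (- t).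
Proof.
  induction l as [|[[c a] b] l IH]; simpl; [reflexivity|]. rewrite IH.
  f_equal. f_equal. unfold ind.
  destruct (Rle_dec (-b) t); destruct (Rle_dec t (-a)); destruct (Rle_dec a (-t));
  destruct (Rle_dec (-t) b); lra.
Qed.

Lemma full1 (M J : R) (phi : R -> R) l : 0 <= M ->
  List.Forall (fun p : trip => let '(c,a,b) := p in 0 <= c /\ a <= b) l ->
  (forall t, t <> 0 -> s1 l t <= M * phi t) ->
  (forall t, phi (- t) = phi t) ->
  (forall e R0, 0 < e <= R0 -> exists I, is_RInt phi e R0 I /\ I <= J) ->
  tot1 l <= M * J + M * J.
Proof.
  intros HM HF Hs Hev Hphi.
  rewrite tot1_filter by auto. rewrite tot1_split.
  set (l' := filter ndeg l).
  assert (HF' : List.Forall (fun p : trip => let '(c,a,b) := p in 0 <= c /\ a < b) l').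
  { rewrite List.Forall_forall in *. intros [[c a] b] Hp.
    unfold l' in Hp. apply filter_In in Hp. destruct Hp as [Hp Hn].
    specialize (HF _ Hp). simpl in HF, Hn. destruct (Rlt_dec a b); [|discriminate]. lra. }
  assert (H1 : pos1 l' <= M * J).
  { apply half1 with phi; auto. intros t Ht.
    eapply Rle_trans. apply s1_filter; auto. apply Hs. lra. }
  assert (H2 : pos1 (map refl1 l') <= M * J).
  { apply half1 with phi; auto.
    - rewrite List.Forall_forall in *. intros [[c a] b] Hp.
      apply in_map_iff in Hp. destruct Hp as [[[c' a'] b'] [Heq Hp]].
      simpl in Heq. inversion Heq; subst. specialize (HF' _ Hp). simpl in HF'. lra.
    - intros t Ht. rewrite s1_refl. rewrite <- (Hev t).
      eapply Rle_trans. apply s1_filter; auto. apply Hs. lra. }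
  lra.
Qed.

Lemma Rpower_le1a x y : 0 < x <= 1 -> 0 <= y -> Rpower x y <= 1.
Proof.
  intros Hx Hy. unfold Rpower. rewrite <- exp_0.
  assert (ln x <= 0).
  { destruct (Req_dec x 1). subst. rewrite ln_1. lra. left. rewrite <- ln_1. apply ln_increasing; lra. }
  destruct (Req_dec (y * ln x) 0) as [E|E]. rewrite E. lra.
  left. apply exp_increasing. nra.
Qed.

Lemma Rpower_le1b x y : 1 <= x -> y <= 0 -> Rpower x y <= 1.
Proof.
  intros Hx Hy. unfold Rpower. rewrite <- exp_0.
  assert (0 <= ln x).
  { destruct (Req_dec x 1). subst. rewrite ln_1. lra. left. rewrite <- ln_1. apply ln_increasing; lra. }
  destruct (Req_dec (y * ln x) 0) as [E|E]. rewrite E. lra.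
  left. apply exp_increasing. nra.
Qed.

Lemma Rpower_pos x y : 0 < Rpower x y.
Proof. unfold Rpower. apply exp_pos. Qed.

Lemma is_RInt_deriveR (f df : R -> R) a b :
  (forall x, Rmin a b <= x <= Rmax a b -> is_derive f x (df x)) ->
  (forall x, Rmin a b <= x <= Rmax a b -> continuous df x) ->
  is_RInt df a b (f b - f a).
Proof. intros H1 H2. exact (is_RInt_derive f df a b H1 H2). Qed.

Lemma is_RInt_Rpower q e R0 : 0 < e <= R0 -> q + 1 <> 0 ->
  is_RInt (fun t => Rpower t q) e R0 ((Rpower R0 (q+1) - Rpower e (q+1)) / (q + 1)).
Proof.
  intros He Hq.
  replace ((Rpower R0 (q+1) - Rpower e (q+1)) / (q + 1)) with
    (((fun t => Rpower t (q+1) / (q+1)) R0) - ((fun t => Rpower t (q+1) / (q+1)) e))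
    by (simpl; field; auto).
  apply (is_RInt_deriveR (fun t => Rpower t (q+1) / (q+1))).
  - intros x Hx. rewrite Rmin_left in Hx by lra. rewrite Rmax_right in Hx by lra.
    apply is_derive_Reals.
    assert (Hx0 : 0 < x) by lra.
    pose proof (derivable_pt_lim_power x (q+1) Hx0) as D.
    replace (q + 1 - 1) with q in D by ring.
    assert (D2 := derivable_pt_lim_scal (fun t => Rpower t (q+1)) (/ (q+1)) x _ D).
    unfold mult_real_fct in D2.
    replace (/ (q + 1) * ((q + 1) * Rpower x q)) with (Rpower x q) in D2 by (field; auto).
    eapply derivable_pt_lim_ext; [|exact D2].
    intros t. simpl. unfold Rdiv. ring.
  - intros x Hx. rewrite Rmin_left in Hx by lra. rewrite Rmax_right in Hx by lra.
    apply continuity_pt_filterlim. apply derivable_continuous_pt.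
    exists (q * Rpower x (q - 1)). apply derivable_pt_lim_power. lra.
Qed.

Definition phi (al bl t : R) : R :=
  if Rlt_dec (Rabs t) 1 then Rpower (Rabs t) (- al) else Rpower (Rabs t) (- bl).

Definition Jc (al bl : R) : R := / (1 - al) + / (bl - 1).

Lemma phi_even al bl t : phi al bl (- t) = phi al bl t.
Proof. unfold phi. rewrite Rabs_Ropp. reflexivity. Qed.

Lemma phi_int al bl : 0 <= al < 1 -> 1 < bl ->
  forall e R0, 0 < e <= R0 -> exists I, is_RInt (phi al bl) e R0 I /\ I <= Jc al bl.
Proof.
  intros Ha Hb.
  assert (Hj1 : 0 < / (1 - al)) by (apply Rinv_0_lt_compat; lra).
  assert (Hj2 : 0 < / (bl - 1)) by (apply Rinv_0_lt_compat; lra).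
  assert (P1 : forall e R0, 0 < e <= R0 -> R0 <= 1 ->
     exists I, is_RInt (phi al bl) e R0 I /\ I <= / (1 - al)).
  { intros e R0 He HR.
    exists ((Rpower R0 (- al + 1) - Rpower e (- al + 1)) / (- al + 1)). split.
    - apply is_RInt_ext with (fun t => Rpower t (- al)).
      + intros t Ht. rewrite Rmin_left in Ht by lra. rewrite Rmax_right in Ht by lra.
        unfold phi. rewrite Rabs_right by lra. destruct (Rlt_dec t 1); [reflexivity|lra].
      + apply is_RInt_Rpower; lra.
    - assert (Rpower R0 (- al + 1) <= 1) by (apply Rpower_le1a; lra).
      pose proof (Rpower_pos e (- al + 1)).
      replace ((Rpower R0 (- al + 1) - Rpower e (- al + 1)) / (- al + 1)) with
        ((Rpower R0 (- al + 1) - Rpower e (- al + 1)) * / (1 - al)) by (field; lra).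
      replace (/ (1 - al)) with (1 * / (1 - al)) at 2 by ring.
      apply Rmult_le_compat_r; lra. }
  assert (P2 : forall e R0, 1 <= e <= R0 ->
     exists I, is_RInt (phi al bl) e R0 I /\ I <= / (bl - 1)).
  { intros e R0 He.
    exists ((Rpower R0 (- bl + 1) - Rpower e (- bl + 1)) / (- bl + 1)). split.
    - apply is_RInt_ext with (fun t => Rpower t (- bl)).
      + intros t Ht. rewrite Rmin_left in Ht by lra. rewrite Rmax_right in Ht by lra.
        unfold phi. rewrite Rabs_right by lra. destruct (Rlt_dec t 1); [lra|reflexivity].
      + apply is_RInt_Rpower; lra.
    - assert (Rpower e (- bl + 1) <= 1) by (apply Rpower_le1b; lra).
      pose proof (Rpower_pos R0 (- bl + 1)).
      replace ((Rpower R0 (- bl + 1) - Rpower e (- bl + 1)) / (- bl + 1)) with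
        ((Rpower e (- bl + 1) - Rpower R0 (- bl + 1)) * / (bl - 1)) by (field; lra).
      replace (/ (bl - 1)) with (1 * / (bl - 1)) at 2 by ring.
      apply Rmult_le_compat_r; lra. }
  intros e R0 He. unfold Jc.
  destruct (Rle_dec R0 1) as [r|r].
  - destruct (P1 e R0 He r) as [I [HI HI']]. exists I. split; auto. lra.
  - destruct (Rle_dec 1 e) as [r0|r0].
    + destruct (P2 e R0 (conj r0 (proj2 He))) as [I [HI HI']]. exists I. split; auto. lra.
    + apply Rnot_le_lt in r. apply Rnot_le_lt in r0.
      assert (E1 : 0 < e <= 1) by lra. assert (E2 : 1 <= 1) by lra. assert (E3 : 1 <= 1 <= R0) by lra.
      destruct (P1 e 1 E1 E2) as [I1 [HI1 HI1']].
      destruct (P2 1 R0 E3) as [I2 [HI2 HI2']].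
      exists (I1 + I2). split. apply is_RInt_ChaslesR with 1; auto. lra.
Qed.


Definition sc (lam : R) (x : nat -> R) : nat -> R := fun i => lam * x i.

Lemma sc_sc lam x : lam <> 0 -> sc lam (sc (/ lam) x) = x.
Proof. intros H. apply functional_extensionality. intro i. unfold sc. field. auto. Qed.

Lemma in_boxb_sc n lam a b h : 0 < lam ->
  in_boxb n (sc (/ lam) a) (sc (/ lam) b) h = in_boxb n a b (sc lam h).
Proof.
  intros Hl. induction n; simpl; auto. rewrite IHn. f_equal. f_equal.
  - unfold Rleb, sc. destruct (Rle_dec (/ lam * a n) (h n)); destruct (Rle_dec (a n) (lam * h n)); auto.
    + exfalso. apply n0. apply Rmult_le_compat_l with (r := lam) in r; [|lra].
      rewrite <- Rmult_assoc, Rinv_r, Rmult_1_l in r by lra. auto.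
    + exfalso. apply n0. apply Rmult_le_compat_l with (r := / lam) in r; [|left; apply Rinv_0_lt_compat; lra].
      rewrite <- Rmult_assoc, Rinv_l, Rmult_1_l in r by lra. auto.
  - unfold Rleb, sc. destruct (Rle_dec (h n) (/ lam * b n)); destruct (Rle_dec (lam * h n) (b n)); auto.
    + exfalso. apply n0. apply Rmult_le_compat_l with (r := lam) in r; [|lra].
      rewrite <- Rmult_assoc, Rinv_r, Rmult_1_l in r by lra. auto.
    + exfalso. apply n0. apply Rmult_le_compat_l with (r := / lam) in r; [|left; apply Rinv_0_lt_compat; lra].
      rewrite <- Rmult_assoc, Rinv_l, Rmult_1_l in r by lra. auto.
Qed.

Lemma box_vol_sc n lam a b : box_vol n (sc (/ lam) a) (sc (/ lam) b) = (/ lam) ^ n * box_vol n a b.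
Proof.
  unfold box_vol. induction n; simpl; [ring|]. rewrite IHn. unfold sc. ring.
Qed.

Definition scl (k lam : R) (l : list step) : list step :=
  map (fun p : step => let '(c,a,b) := p in (k * c, sc (/ lam) a, sc (/ lam) b)) l.

Lemma scl_val n k lam l h : 0 < lam -> step_val n (scl k lam l) h = k * step_val n l (sc lam h).
Proof.
  intros Hl. induction l as [|[[c a] b] l IH]; simpl; [ring|]. rewrite IH, in_boxb_sc by auto.
  destruct (in_boxb n a b (sc lam h)); ring.
Qed.

Lemma scl_int n k lam l : step_int n (scl k lam l) = k * (/ lam) ^ n * step_int n l.
Proof.
  induction l as [|[[c a] b] l IH]; simpl; [ring|]. rewrite IH, box_vol_sc. ring.
Qed.

Lemma ls_scale n f k lam w : 0 < k -> 0 < lam -> lower_sums n f w ->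
  lower_sums n (fun h => k * f (sc lam h)) (k * (/ lam) ^ n * w).
Proof.
  intros Hk Hl [l [[HF Hv] Hw]]. exists (scl k lam l). split; [split|].
  - rewrite Forall_forall in *. intros [[c' a'] b'] Hin. unfold scl in Hin.
    apply in_map_iff in Hin. destruct Hin as [[[c a] b] [Heq Hin]]. inversion Heq; subst.
    specialize (HF _ Hin). simpl in HF. destruct HF as [Hc Hab]. split.
    + apply Rmult_le_pos; lra.
    + intros i Hi. unfold sc. apply Rmult_le_compat_l. left; apply Rinv_0_lt_compat; lra. auto.
  - intros x. rewrite scl_val by auto. apply Rmult_le_compat_l; [lra|]. apply Hv.
  - rewrite scl_int, Hw. ring.
Qed.

Lemma ls_scale_inv n f k lam v : 0 < k -> 0 < lam ->
  lower_sums n (fun h => k * f (sc lam h)) v -> lower_sums n f (/ k * (/ / lam) ^ n * v).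
Proof.
  intros Hk Hl H.
  assert (E : f = (fun h => / k * (fun h => k * f (sc lam h)) (sc (/ lam) h))).
  { apply functional_extensionality. intros h. rewrite sc_sc by lra. field. lra. }
  rewrite E at 1. apply (ls_scale n (fun h => k * f (sc lam h)) (/ k) (/ lam) v).
  apply Rinv_0_lt_compat; auto. apply Rinv_0_lt_compat; auto. auto.
Qed.

Lemma lint_lub n f : bound (lower_sums n f) -> (exists v, lower_sums n f v) ->
  is_lub (lower_sums n f) (lint n f).
Proof.
  intros Hb Hne. unfold lint. apply epsilon_spec.
  destruct (completeness _ Hb Hne) as [m Hm]. exists m. auto.
Qed.

Lemma lint_scale_b n f k lam : 0 < k -> 0 < lam ->
  bound (lower_sums n f) -> (exists v, lower_sums n f v) ->
  lint n (fun h => k * f (sc lam h)) = k * (/ lam) ^ n * lint n f.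
Proof.
  intros Hk Hl Hb Hne.
  assert (Hq : 0 < k * (/ lam) ^ n) by (apply Rmult_lt_0_compat; auto; apply pow_lt; apply Rinv_0_lt_compat; auto).
  pose proof (lint_lub n f Hb Hne) as [Hub Hleast].
  assert (Hlub : is_lub (lower_sums n (fun h => k * f (sc lam h))) (k * (/ lam) ^ n * lint n f)).
  { split.
    - intros v Hv. apply ls_scale_inv in Hv; auto. apply Hub in Hv.
      apply Rmult_le_compat_l with (r := k * (/ lam) ^ n) in Hv; [|lra].
      replace (k * (/ lam) ^ n * (/ k * (/ / lam) ^ n * v)) with v in Hv; auto.
      rewrite Rinv_inv.
      replace (k * (/ lam) ^ n * (/ k * lam ^ n * v)) with (((/ lam) ^ n * lam ^ n) * (k * / k) * v) by ring.
      rewrite Rinv_r by lra. rewrite <- Rpow_mult_distr. rewrite Rinv_l by lra. rewrite pow1. ring.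
    - intros b Hb'.
      assert (is_upper_bound (lower_sums n f) (/ (k * (/ lam) ^ n) * b)).
      { intros w Hw. apply (ls_scale n f k lam w Hk Hl) in Hw. apply Hb' in Hw.
        apply Rmult_le_compat_l with (r := / (k * (/ lam) ^ n)) in Hw; [|left; apply Rinv_0_lt_compat; auto].
        rewrite <- Rmult_assoc, Rinv_l, Rmult_1_l in Hw by lra. auto. }
      apply Hleast in H.
      apply Rmult_le_compat_l with (r := k * (/ lam) ^ n) in H; [|lra].
      rewrite <- Rmult_assoc, Rinv_r, Rmult_1_l in H by lra. auto. }
  assert (Hb2 : bound (lower_sums n (fun h => k * f (sc lam h)))) by (exists (k * (/ lam) ^ n * lint n f); apply Hlub).
  assert (Hne2 : exists v, lower_sums n (fun h => k * f (sc lam h)) v).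
  { destruct Hne as [v Hv]. exists (k * (/ lam) ^ n * v). apply ls_scale; auto. }
  apply (is_lub_u _ _ _ (lint_lub _ _ Hb2 Hne2) Hlub).
Qed.

Lemma lint_scale_u n f k lam : 0 < k -> 0 < lam ->
  ~ bound (lower_sums n f) ->
  lint n (fun h => k * f (sc lam h)) = lint n f.
Proof.
  intros Hk Hl Hnb.
  assert (Hnb2 : ~ bound (lower_sums n (fun h => k * f (sc lam h)))).
  { intros [m Hm]. apply Hnb. exists (/ (k * (/ lam) ^ n) * m).
    assert (Hq : 0 < k * (/ lam) ^ n) by (apply Rmult_lt_0_compat; auto; apply pow_lt; apply Rinv_0_lt_compat; auto).
    intros w Hw. apply (ls_scale n f k lam w Hk Hl) in Hw. apply Hm in Hw.
    apply Rmult_le_compat_l with (r := / (k * (/ lam) ^ n)) in Hw; [|left; apply Rinv_0_lt_compat; auto].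
    rewrite <- Rmult_assoc, Rinv_l, Rmult_1_l in Hw by lra. auto. }
  unfold lint. f_equal. apply functional_extensionality. intros v.
  apply propositional_extensionality. split; intros [H _].
  - exfalso. apply Hnb2. exists v. auto.
  - exfalso. apply Hnb. exists v. auto.
Qed.


Lemma prod_upto_ext k f g : (forall i, (i < k)%nat -> f i = g i) -> prod_upto k f = prod_upto k g.
Proof.
  induction k; intros H; simpl; auto. rewrite IHk by (intros; apply H; lia). rewrite H by lia. auto.
Qed.

Lemma sum_upto_ext k f g : (forall i, (i < k)%nat -> f i = g i) -> sum_upto k f = sum_upto k g.
Proof.
  induction k; intros H; simpl; auto. rewrite IHk by (intros; apply H; lia). rewrite H by lia. auto.
Qed.

Lemma prod_upto_ge0 k f : (forall i, (i < k)%nat -> 0 <= f i) -> 0 <= prod_upto k f.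
Proof.
  induction k; intros H; simpl; [lra|]. apply Rmult_le_pos. apply IHk; intros; apply H; lia. apply H; lia.
Qed.

Lemma in_boxb_ext k a b x y : (forall i, (i < k)%nat -> x i = y i) -> in_boxb k a b x = in_boxb k a b y.
Proof.
  induction k; intros H; simpl; auto. rewrite IHk by (intros; apply H; lia). rewrite H by lia. auto.
Qed.

Lemma setc_eq x i t : setc x i t i = t.
Proof. unfold setc. rewrite Nat.eqb_refl. auto. Qed.

Lemma setc_neq x i t j : j <> i -> setc x i t j = x j.
Proof. intros H. unfold setc. apply Nat.eqb_neq in H. rewrite H. auto. Qed.

Definition slice (k : nat) (t : R) (l : list step) : list step :=
  map (fun p : step => let '(c,a,b) := p in (c * ind (a k) (b k) t, a, b)) l.
Definition proj1d (k : nat) (l : list step) : list trip :=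
  map (fun p : step => let '(c,a,b) := p in (c * box_vol k a b, a k, b k)) l.

Lemma slice_val k t l x : step_val k (slice k t l) x = step_val (S k) l (setc x k t).
Proof.
  induction l as [|[[c a] b] l IH]; simpl; auto. rewrite IH. f_equal.
  rewrite (in_boxb_ext k a b (setc x k t) x) by (intros; apply setc_neq; lia).
  rewrite setc_eq. unfold ind, Rleb.
  destruct (in_boxb k a b x); simpl; [|ring].
  destruct (Rle_dec (a k) t); destruct (Rle_dec t (b k)); simpl; ring.
Qed.

Lemma slice_int k t l : step_int k (slice k t l) = s1 (proj1d k l) t.
Proof.
  induction l as [|[[c a] b] l IH]; simpl; auto. rewrite IH. ring.
Qed.

Lemma proj1d_tot k l : tot1 (proj1d k l) = step_int (S k) l.
Proof.
  induction l as [|[[c a] b] l IH]; simpl; auto. rewrite IH. unfold box_vol. simpl. ring.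
Qed.

Lemma step_int0 l x : step_int 0 l = step_val 0 l x.
Proof.
  induction l as [|[[c a] b] l IH]; simpl; auto. rewrite IH. unfold box_vol. simpl. ring.
Qed.

Lemma prod_bound (phi0 : R -> R) (I : R) :
  (forall t, 0 <= phi0 t) -> 0 <= I ->
  (forall M l, 0 <= M -> List.Forall (fun p : trip => let '(c,a,b) := p in 0 <= c /\ a <= b) l ->
     (forall t, t <> 0 -> s1 l t <= M * phi0 t) -> tot1 l <= M * I) ->
  forall k M l, 0 <= M ->
  List.Forall (fun p : step => let '(c,a,b) := p in 0 <= c /\ forall i, (i < k)%nat -> a i <= b i) l ->
  (forall x, (forall i, (i < k)%nat -> x i <> 0) ->
      step_val k l x <= M * prod_upto k (fun i => phi0 (x i))) ->
  step_int k l <= M * I ^ k.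
Proof.
  intros Hp0 HI H1D k. induction k as [|k IH]; intros M l HM HF Hv.
  - rewrite (step_int0 l (fun _ => 0)). specialize (Hv (fun _ => 0)).
    simpl in *. rewrite Rmult_1_r in *. apply Hv. intros; lia.
  - rewrite <- proj1d_tot. rewrite <- tech_pow_Rmult.
    replace (M * (I * I ^ k)) with ((M * I ^ k) * I) by ring.
    apply H1D.
    + apply Rmult_le_pos; auto. apply pow_le; auto.
    + rewrite List.Forall_forall in *. intros [[c' a'] b'] Hin.
      unfold proj1d in Hin. apply in_map_iff in Hin. destruct Hin as [[[c a] b] [Heq Hin]].
      inversion Heq; subst. specialize (HF _ Hin). simpl in HF. destruct HF as [Hc Hab].
      split. apply Rmult_le_pos; auto. unfold box_vol. apply prod_upto_ge0. intros i Hi.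
      specialize (Hab i ltac:(lia)). lra. apply Hab. lia.
    + intros t Ht. rewrite <- slice_int.
      replace (M * I ^ k * phi0 t) with ((M * phi0 t) * I ^ k) by ring.
      apply IH.
      * apply Rmult_le_pos; auto.
      * rewrite List.Forall_forall in *. intros [[c' a'] b'] Hin.
        unfold slice in Hin. apply in_map_iff in Hin. destruct Hin as [[[c a] b] [Heq Hin]].
        inversion Heq; subst. specialize (HF _ Hin). simpl in HF. destruct HF as [Hc Hab].
        split. apply Rmult_le_pos; auto. apply ind_ge0. intros i Hi. apply Hab. lia.
      * intros x Hx. rewrite slice_val.
        eapply Rle_trans. apply Hv.
        { intros i Hi. destruct (Nat.eq_dec i k). subst. rewrite setc_eq. auto.
          rewrite setc_neq by auto. apply Hx. lia. }
        simpl. rewrite setc_eq.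
        rewrite (prod_upto_ext k (fun i => phi0 (setc x k t i)) (fun i => phi0 (x i)))
          by (intros i Hi; rewrite setc_neq by lia; auto).
        right. ring.
Qed.


Lemma sum_sq_ge0 d h : 0 <= sum_upto d (fun i => h i ^ 2).
Proof. induction d; cbn [sum_upto]; [lra|]. pose proof (pow2_ge_0 (h d)). lra. Qed.

Lemma vnorm_ge0 d h : 0 <= vnorm d h.
Proof. apply sqrt_pos. Qed.

Lemma vnorm_ext d h g : (forall i, (i < d)%nat -> h i = g i) -> vnorm d h = vnorm d g.
Proof. intros H. unfold vnorm. f_equal. apply sum_upto_ext. intros i Hi. rewrite H; auto. Qed.

Lemma vnorm_sc d lam h : 0 < lam -> vnorm d (sc lam h) = lam * vnorm d h.
Proof.
  intros Hl. unfold vnorm.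
  assert (E : sum_upto d (fun i => sc lam h i ^ 2) = lam ^ 2 * sum_upto d (fun i => h i ^ 2)).
  { induction d; cbn [sum_upto]; [ring|]. rewrite IHd. unfold sc. ring. }
  rewrite E. rewrite sqrt_mult_alt by (apply pow2_ge_0).
  rewrite sqrt_pow2 by lra. auto.
Qed.

Lemma sum_sq_ge_term d h i : (i < d)%nat -> h i ^ 2 <= sum_upto d (fun j => h j ^ 2).
Proof.
  induction d; intros Hi; [lia|]. cbn [sum_upto].
  destruct (Nat.eq_dec i d).
  - subst. pose proof (sum_sq_ge0 d h). lra.
  - pose proof (pow2_ge_0 (h d)). assert (h i ^ 2 <= sum_upto d (fun j => h j ^ 2)) by (apply IHd; lia). lra.
Qed.

Lemma coord_le_vnorm d h i : (i < d)%nat -> Rabs (h i) <= vnorm d h.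
Proof.
  intros Hi. unfold vnorm. rewrite <- sqrt_Rsqr_abs. apply sqrt_le_1_alt.
  unfold Rsqr. replace (h i * h i) with (h i ^ 2) by ring. apply sum_sq_ge_term; auto.
Qed.

Lemma vnorm0_coords d h : vnorm d h = 0 -> forall i, (i < d)%nat -> h i = 0.
Proof.
  intros H i Hi. pose proof (coord_le_vnorm d h i Hi). pose proof (Rabs_pos (h i)).
  destruct (Req_dec (h i) 0); auto. pose proof (Rabs_pos_lt _ H2). lra.
Qed.

Lemma vnorm_pos d h i : (i < d)%nat -> h i <> 0 -> 0 < vnorm d h.
Proof.
  intros Hi Hh. pose proof (coord_le_vnorm d h i Hi). pose proof (Rabs_pos_lt _ Hh). lra.
Qed.

Definition sabs (d : nat) (h : nat -> R) : R := sum_upto d (fun i => Rabs (h i)).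

Lemma sabs_ge0 d h : 0 <= sabs d h.
Proof. unfold sabs. induction d; cbn [sum_upto]; [lra|]. pose proof (Rabs_pos (h d)). lra. Qed.

Lemma vnorm_le_sabs d h : vnorm d h <= sabs d h.
Proof.
  unfold vnorm. rewrite <- (sqrt_pow2 (sabs d h)) by apply sabs_ge0.
  apply sqrt_le_1_alt. induction d; unfold sabs in *; cbn [sum_upto] in *; [lra|].
  pose proof (sabs_ge0 d h). unfold sabs in H.
  pose proof (Rabs_pos (h d)). 
  replace (h d ^ 2) with (Rabs (h d) ^ 2) by (rewrite <- Rsqr_pow2; rewrite <- Rsqr_abs; unfold Rsqr; ring).
  nra.
Qed.

Lemma sabs_le_vnorm d h : sabs d h <= INR d * vnorm d h.
Proof.
  unfold sabs. induction d; cbn [sum_upto].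
  - simpl. pose proof (vnorm_ge0 0 h). lra.
  - assert (vnorm d h <= vnorm (S d) h).
    { unfold vnorm. apply sqrt_le_1_alt. cbn [sum_upto]. pose proof (pow2_ge_0 (h d)). lra. }
    assert (Rabs (h d) <= vnorm (S d) h) by (apply coord_le_vnorm; lia).
    pose proof (pos_INR d).
    assert (INR d * vnorm d h <= INR d * vnorm (S d) h) by (apply Rmult_le_compat_l; auto).
    rewrite S_INR. lra.
Qed.

Lemma setc_sc lam x i t : sc lam (setc x i t) = setc (sc lam x) i (lam * t).
Proof.
  apply functional_extensionality. intros j. unfold sc, setc. destruct (Nat.eqb j i); auto.
Qed.

Lemma vsub_sc lam y x : vsub (sc lam y) (sc lam x) = sc lam (vsub y x).
Proof. apply functional_extensionality. intros j. unfold sc, vsub. ring. Qed.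

Lemma contd_scale d c lam f : 0 < lam -> contd d f -> contd d (fun y => c * f (sc lam y)).
Proof.
  intros Hl Hf x eps He.
  destruct (Hf (sc lam x) (eps / (Rabs c + 1))) as [del [Hd Hdel]].
  { apply Rdiv_lt_0_compat; auto. pose proof (Rabs_pos c). lra. }
  exists (del / lam). split. apply Rdiv_lt_0_compat; auto.
  intros y Hy. rewrite <- Rmult_minus_distr_l, Rabs_mult.
  assert (Hy' : vnorm d (vsub (sc lam y) (sc lam x)) < del).
  { rewrite vsub_sc, vnorm_sc by auto.
    apply Rmult_lt_compat_l with (r := lam) in Hy; auto.
    replace (lam * (del / lam)) with del in Hy by (field; lra). auto. }
  specialize (Hdel _ Hy').
  pose proof (Rabs_pos c). pose proof (Rabs_pos (f (sc lam y) - f (sc lam x))).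
  apply Rle_lt_trans with (Rabs c * (eps / (Rabs c + 1))).
  apply Rmult_le_compat_l; lra.
  replace (Rabs c * (eps / (Rabs c + 1))) with (eps * (Rabs c / (Rabs c + 1))) by (field; lra).
  assert (Rabs c / (Rabs c + 1) < 1).
  { apply Rmult_lt_reg_r with (Rabs c + 1). lra. unfold Rdiv. rewrite Rmult_assoc, Rinv_l by lra. lra. }
  nra.
Qed.

Lemma dpl_scal f c x l : derivable_pt_lim f x l -> derivable_pt_lim (fun t => c * f t) x (c * l).
Proof. intros H. exact (derivable_pt_lim_scal f c x l H). Qed.

Lemma dpl_lin lam x : derivable_pt_lim (fun t => lam * t) x lam.
Proof.
  intros eps He. exists (mkposreal 1 Rlt_0_1). intros h Hh _.
  replace ((lam * (x + h) - lam * x) / h - lam) with 0 by (field; auto).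
  rewrite Rabs_R0. auto.
Qed.

Lemma Cn_scale d n : forall c lam f, 0 < lam -> Cn d n f -> Cn d n (fun y => c * f (sc lam y)).
Proof.
  induction n as [|m IH]; intros c lam f Hl Hf.
  - simpl in *. split; auto. apply contd_scale; tauto.
  - simpl in *. destruct Hf as [Hc [Du [HD HC]]]. split. apply contd_scale; auto.
    exists (fun i y => (c * lam) * Du i (sc lam y)). split.
    + intros i x Hi.
      assert (E : (fun t => c * f (sc lam (setc x i t))) =
                  (fun t => c * (fun s => f (setc (sc lam x) i s)) ((fun t => lam * t) t))).
      { apply functional_extensionality. intros t. rewrite setc_sc. auto. }
      rewrite E. clear E.
      replace (c * lam * Du i (sc lam x)) with (c * (Du i (sc lam x) * lam)) by ring.
      apply dpl_scal.
      apply (derivable_pt_lim_comp (fun t => lam * t) (fun s => f (setc (sc lam x) i s))).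
      * apply dpl_lin.
      * specialize (HD i (sc lam x) Hi). unfold sc at 2 in HD. exact HD.
    + intros i Hi. apply IH; auto.
Qed.

Lemma Ccinf_scale d lam u : 0 < lam -> Ccinf d u -> Ccinf d (fun y => u (sc lam y)).
Proof.
  intros Hl [Hdep [Hcn [R0 HR]]].
  assert (E : (fun y => u (sc lam y)) = (fun y => 1 * u (sc lam y))).
  { apply functional_extensionality; intros; ring. }
  split; [|split].
  - intros x y H. apply Hdep. intros i Hi. unfold sc. rewrite H; auto.
  - intros n. rewrite E. apply Cn_scale; auto.
  - exists (R0 / lam). intros x Hx. apply HR. rewrite vnorm_sc by auto.
    apply Rmult_lt_compat_l with (r := lam) in Hx; auto.
    replace (lam * (R0 / lam)) with R0 in Hx by (field; lra). auto.
Qed.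


Definition inbox (d : nat) (a b y : nat -> R) : Prop := forall i, (i < d)%nat -> a i <= y i <= b i.

Lemma sum_upto_le k f g : (forall i, (i < k)%nat -> f i <= g i) -> sum_upto k f <= sum_upto k g.
Proof. induction k; intros H; cbn [sum_upto]; [lra|]. assert (f k <= g k) by (apply H; lia).
  assert (sum_upto k f <= sum_upto k g) by (apply IHk; intros; apply H; lia). lra. Qed.

Lemma sum_upto_scal k c f : sum_upto k (fun i => c * f i) = c * sum_upto k f.
Proof. induction k; cbn [sum_upto]; [ring|]. rewrite IHk. ring. Qed.

Section Compact.
Variable d : nat.
Variable f : (nat -> R) -> R.

Definition Ub (p : (nat -> R) * (nat -> R)) : Prop :=
  forall M, exists y, inbox d (fst p) (snd p) y /\ M < Rabs (f y).

Definition valid (p : (nat -> R) * (nat -> R)) : Prop := forall i, (i < d)%nat -> fst p i <= snd p i.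

Definition mid (p : (nat -> R) * (nat -> R)) (i : nat) : R := (fst p i + snd p i) / 2.
Definition lefth (i : nat) p : (nat -> R) * (nat -> R) := (fst p, setc (snd p) i (mid p i)).
Definition righth (i : nat) p : (nat -> R) * (nat -> R) := (setc (fst p) i (mid p i), snd p).

Definition nxt (i : nat) p : (nat -> R) * (nat -> R) :=
  if excluded_middle_informative (Ub (lefth i p)) then lefth i p else righth i p.

Lemma not_Ub p : ~ Ub p -> exists M, forall y, inbox d (fst p) (snd p) y -> Rabs (f y) <= M.
Proof.
  intros H. apply not_all_ex_not in H. destruct H as [M HM]. exists M. intros y Hy.
  destruct (Rle_dec (Rabs (f y)) M); auto. exfalso. apply HM. exists y. split; auto. lra.
Qed.

Lemma nxt_Ub i p : (i < d)%nat -> Ub p -> Ub (nxt i p).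
Proof.
  intros Hi HU. unfold nxt. destruct (excluded_middle_informative (Ub (lefth i p))); auto.
  destruct (classic (Ub (righth i p))) as [H|H]; auto. exfalso.
  destruct (not_Ub _ n) as [M1 H1]. destruct (not_Ub _ H) as [M2 H2].
  destruct (HU (Rmax M1 M2)) as [y [Hy Hlt]].
  destruct (Rle_dec (y i) (mid p i)).
  - assert (Rabs (f y) <= M1).
    { apply H1. intros j Hj. simpl. destruct (Nat.eq_dec j i).
      + subst. rewrite setc_eq. split; [apply Hy; auto|auto].
      + rewrite setc_neq by auto. apply Hy; auto. }
    pose proof (Rmax_l M1 M2). lra.
  - assert (Rabs (f y) <= M2).
    { apply H2. intros j Hj. simpl. destruct (Nat.eq_dec j i).
      + subst. rewrite setc_eq. split; [lra|apply Hy; auto].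
      + rewrite setc_neq by auto. apply Hy; auto. }
    pose proof (Rmax_r M1 M2). lra.
Qed.

Lemma nxt_props i p : (i < d)%nat -> valid p ->
  (forall j, j <> i -> fst (nxt i p) j = fst p j /\ snd (nxt i p) j = snd p j) /\
  fst p i <= fst (nxt i p) i /\ snd (nxt i p) i <= snd p i /\
  snd (nxt i p) i - fst (nxt i p) i = (snd p i - fst p i) / 2.
Proof.
  intros Hi Hv. specialize (Hv i Hi) as Hvi. unfold nxt. destruct (excluded_middle_informative (Ub (lefth i p))).
  - unfold lefth, mid; simpl. split.
    + intros j Hj. rewrite setc_neq by auto. auto.
    + rewrite setc_eq. split; [lra|]. split; [lra|field].
  - unfold righth, mid; simpl. split.
    + intros j Hj. rewrite setc_neq by auto. auto.
    + rewrite setc_eq. split; [lra|]. split; [lra|field].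
Qed.

Lemma nxt_valid i p : (i < d)%nat -> valid p -> valid (nxt i p).
Proof.
  intros Hi Hv j Hj. destruct (nxt_props i p Hi Hv) as [H1 [H2 [H3 H4]]].
  destruct (Nat.eq_dec j i).
  - subst. specialize (Hv i Hi). lra.
  - destruct (H1 j n) as [-> ->]. apply Hv; auto.
Qed.

Fixpoint rnd (k : nat) p : (nat -> R) * (nat -> R) :=
  match k with O => p | S k => nxt k (rnd k p) end.

Lemma rnd_props k p : (k <= d)%nat -> valid p ->
  valid (rnd k p) /\ (Ub p -> Ub (rnd k p)) /\
  (forall j, (j < d)%nat -> fst p j <= fst (rnd k p) j /\ snd (rnd k p) j <= snd p j) /\
  (forall j, (j < k)%nat -> snd (rnd k p) j - fst (rnd k p) j = (snd p j - fst p j) / 2) /\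
  (forall j, (k <= j)%nat -> fst (rnd k p) j = fst p j /\ snd (rnd k p) j = snd p j).
Proof.
  intros Hk Hv. induction k as [|k IH].
  - simpl. split; auto. split; auto. split. intros; lra. split. intros; lia. auto.
  - destruct IH as [V [U [N [W E]]]]; [lia|]. simpl.
    assert (Hkd : (k < d)%nat) by lia.
    destruct (nxt_props k (rnd k p) Hkd V) as [H1 [H2 [H3 H4]]].
    split. apply nxt_valid; auto.
    split. intros. apply nxt_Ub; auto.
    split.
    { intros j Hj. destruct (Nat.eq_dec j k).
      - subst. specialize (N k Hj). lra.
      - destruct (H1 j n) as [-> ->]. auto. }
    split.
    { intros j Hj. destruct (Nat.eq_dec j k).
      - subst. rewrite H4. destruct (E k (le_n k)) as [-> ->]. auto.
      - destruct (H1 j n) as [-> ->]. apply W. lia. }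
    { intros j Hj. destruct (H1 j ltac:(lia)) as [-> ->]. apply E. lia. }
Qed.

Definition sq (p0 : (nat -> R) * (nat -> R)) (n : nat) := Nat.iter n (rnd d) p0.

Lemma sq_props p0 n : valid p0 -> Ub p0 ->
  valid (sq p0 n) /\ Ub (sq p0 n) /\
  (forall j, (j < d)%nat -> snd (sq p0 n) j - fst (sq p0 n) j = (snd p0 j - fst p0 j) / 2 ^ n) /\
  (forall j, (j < d)%nat -> fst (sq p0 n) j <= fst (sq p0 (S n)) j /\ snd (sq p0 (S n)) j <= snd (sq p0 n) j).
Proof.
  intros Hv HU. induction n as [|n IH].
  - simpl. split; auto. split; auto. split. intros; field.
    intros j Hj. destruct (rnd_props d p0 (le_n d) Hv) as [_ [_ [N _]]]. apply N; auto.
  - destruct IH as [V [U [W N]]].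
    assert (Eq : sq p0 (S n) = rnd d (sq p0 n)) by reflexivity.
    destruct (rnd_props d (sq p0 n) (le_n d) V) as [V' [U' [N' [W' _]]]].
    rewrite Eq. split; auto. split; auto. split.
    + intros j Hj. rewrite W' by auto. rewrite W by auto. simpl. field. apply pow_nonzero. lra.
    + intros j Hj. destruct (rnd_props d (rnd d (sq p0 n)) (le_n d) V') as [_ [_ [N'' _]]].
      apply N''; auto.
Qed.

Lemma sq_mono p0 m n j : valid p0 -> Ub p0 -> (j < d)%nat -> (m <= n)%nat ->
  fst (sq p0 m) j <= fst (sq p0 n) j /\ snd (sq p0 n) j <= snd (sq p0 m) j.
Proof.
  intros Hv HU Hj Hmn. induction Hmn. lra.
  destruct (sq_props p0 m0 Hv HU) as [_ [_ [_ N]]]. specialize (N j Hj). lra.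
Qed.

Lemma sq_cross p0 m n j : valid p0 -> Ub p0 -> (j < d)%nat -> fst (sq p0 m) j <= snd (sq p0 n) j.
Proof.
  intros Hv HU Hj. destruct (Nat.le_ge_cases m n) as [l|g].
  - destruct (sq_mono p0 m n j Hv HU Hj l). destruct (sq_props p0 n Hv HU) as [V _]. specialize (V j Hj). lra.
  - destruct (sq_mono p0 n m j Hv HU Hj g). destruct (sq_props p0 m Hv HU) as [V _]. specialize (V j Hj). lra.
Qed.

Lemma INR_le_pow2 n : INR n <= 2 ^ n.
Proof. induction n. simpl; lra. rewrite S_INR. simpl. assert (1 <= 2 ^ n) by (apply pow_R1_Rle; lra). lra. Qed.

Lemma contd_bounded : contd d f -> forall p0, valid p0 ->
  exists M, forall y, inbox d (fst p0) (snd p0) y -> Rabs (f y) <= M.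
Proof.
  intros Hc p0 Hv. destruct (classic (Ub p0)) as [HU|HU]; [|apply not_Ub; auto].
  exfalso.
  set (E := fun j v => exists n, v = fst (sq p0 n) j).
  set (x := fun j => epsilon (inhabits 0) (fun l => is_lub (E j) l)).
  assert (Hx : forall j, (j < d)%nat -> forall n, fst (sq p0 n) j <= x j <= snd (sq p0 n) j).
  { intros j Hj n.
    assert (Hl : is_lub (E j) (x j)).
    { unfold x. apply epsilon_spec. apply upper_bound_thm.
      - exists (snd p0 j). intros v [m ->]. apply (sq_cross p0 m 0 j Hv HU Hj).
      - exists (fst (sq p0 0) j). exists 0%nat. auto. }
    destruct Hl as [Hub Hleast]. split.
    - apply Hub. exists n; auto.
    - apply Hleast. intros v [m ->]. apply sq_cross; auto. }
  destruct (Hc x 1 Rlt_0_1) as [del [Hd Hdel]].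
  set (W := sum_upto d (fun j => snd p0 j - fst p0 j)).
  assert (HW : 0 <= W).
  { unfold W. replace 0 with (sum_upto d (fun _ => 0)).
    apply sum_upto_le. intros i Hi. specialize (Hv i Hi). lra.
    clear. induction d; cbn [sum_upto]; auto. rewrite IHn. ring. }
  destruct (archimed_cor1 (del / (W + 1))) as [N [HN HN0]].
  { apply Rdiv_lt_0_compat; lra. }
  destruct (sq_props p0 N Hv HU) as [VN [UN [WN _]]].
  destruct (UN (Rabs (f x) + 1)) as [y [Hy Hfy]].
  assert (Hvn : vnorm d (vsub y x) < del).
  { eapply Rle_lt_trans. apply vnorm_le_sabs. unfold sabs.
    apply Rle_lt_trans with (sum_upto d (fun j => / 2 ^ N * (snd p0 j - fst p0 j))).
    - apply sum_upto_le. intros j Hj. unfold vsub.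
      specialize (Hy j Hj). specialize (Hx j Hj N). specialize (WN j Hj).
      replace (/ 2 ^ N * (snd p0 j - fst p0 j)) with ((snd p0 j - fst p0 j) / 2 ^ N) by (unfold Rdiv; ring).
      rewrite <- WN. apply Rabs_le. simpl in Hy. lra.
    - rewrite sum_upto_scal. fold W.
      assert (HNpos : 0 < INR N) by (apply lt_0_INR; auto).
      pose proof (INR_le_pow2 N).
      assert (/ 2 ^ N <= / INR N) by (apply Rinv_le_contravar; auto).
      assert (/ INR N * (W + 1) < del).
      { apply Rmult_lt_compat_r with (r := W + 1) in HN; [|lra].
        replace (del / (W + 1) * (W + 1)) with del in HN by (field; lra). auto. }
      assert (/ 2 ^ N * W <= / INR N * (W + 1)).
      { apply Rle_trans with (/ INR N * W). apply Rmult_le_compat_r; auto.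
        apply Rmult_le_compat_l. left; apply Rinv_0_lt_compat; auto. lra. }
      lra. }
  specialize (Hdel y Hvn).
  assert (Rabs (f y) <= Rabs (f x) + 1).
  { replace (f y) with ((f y - f x) + f x) by ring.
    eapply Rle_trans. apply Rabs_triang. lra. }
  lra.
Qed.

End Compact.


Lemma mvt_bound (G G' : R -> R) y z K :
  (forall t, Rmin y z <= t <= Rmax y z -> derivable_pt_lim G t (G' t)) ->
  (forall t, Rmin y z <= t <= Rmax y z -> Rabs (G' t) <= K) ->
  Rabs (G z - G y) <= K * Rabs (z - y).
Proof.
  intros HD HK. destruct (Rtotal_order y z) as [H|[H|H]].
  - destruct (MVT_cor2 G G' y z H) as [c [Hc Hc']].
    { intros c Hc. apply HD. rewrite Rmin_left, Rmax_right by lra. auto. }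
    rewrite Hc, Rabs_mult. apply Rmult_le_compat_r. apply Rabs_pos.
    apply HK. rewrite Rmin_left, Rmax_right by lra. lra.
  - subst. replace (G z - G z) with 0 by ring. replace (z - z) with 0 by ring.
    rewrite Rabs_R0. assert (0 <= K). { apply Rle_trans with (Rabs (G' z)). apply Rabs_pos. apply HK. unfold Rmin, Rmax. destruct (Rle_dec z z); lra. } rewrite Rmult_0_r; lra.
  - destruct (MVT_cor2 G G' z y H) as [c [Hc Hc']].
    { intros c Hc. apply HD. rewrite Rmin_right, Rmax_left by lra. auto. }
    replace (G z - G y) with (- (G y - G z)) by ring. rewrite Rabs_Ropp.
    replace (z - y) with (- (y - z)) by ring. rewrite Rabs_Ropp.
    rewrite Hc, Rabs_mult. apply Rmult_le_compat_r. apply Rabs_pos.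
    apply HK. rewrite Rmin_right, Rmax_left by lra. lra.
Qed.

Lemma setc_setc x k t s : setc (setc x k t) k s = setc x k s.
Proof. apply functional_extensionality. intros j. unfold setc. destruct (Nat.eqb j k); auto. Qed.

Definition pth (k : nat) (y z : nat -> R) : nat -> R := fun i => if Nat.ltb i k then y i else z i.

Lemma lip d f Df a b K : depends_first d f ->
  (forall j y, (j < d)%nat -> derivable_pt_lim (fun t => f (setc y j t)) (y j) (Df j y)) ->
  (forall j y, (j < d)%nat -> inbox d a b y -> Rabs (Df j y) <= K) ->
  forall y z, inbox d a b y -> inbox d a b z -> Rabs (f y - f z) <= K * sabs d (vsub y z).
Proof.
  intros Hdep HD HK y z Hy Hz.
  assert (Hind : forall k, (k <= d)%nat -> Rabs (f (pth k y z) - f z) <= K * sum_upto k (fun j => Rabs (vsub y z j))).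
  { induction k as [|k IH]; intros Hk.
    - assert (pth 0 y z = z) by (apply functional_extensionality; intros i; reflexivity).
      rewrite H. cbn [sum_upto]. replace (f z - f z) with 0 by ring. rewrite Rabs_R0. lra.
    - assert (E1 : pth (S k) y z = setc (pth k y z) k (y k)).
      { apply functional_extensionality. intros i. unfold pth, setc.
        destruct (Nat.eqb_spec i k); destruct (Nat.ltb_spec i (S k)); destruct (Nat.ltb_spec i k);
          subst; auto; lia. }
      assert (E2 : pth k y z = setc (pth k y z) k (z k)).
      { apply functional_extensionality. intros i. unfold pth, setc.
        destruct (Nat.eqb_spec i k); destruct (Nat.ltb_spec i k); subst; auto; lia. }
      assert (Hin : forall t, Rmin (z k) (y k) <= t <= Rmax (z k) (y k) -> inbox d a b (setc (pth k y z) k t)).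
      { intros t Ht i Hi. unfold setc, pth. destruct (Nat.eqb_spec i k).
        - subst. specialize (Hy k Hi). specialize (Hz k Hi).
          unfold Rmin, Rmax in Ht. destruct (Rle_dec (z k) (y k)); lra.
        - destruct (Nat.ltb i k); auto. }
      assert (Hstep : Rabs (f (pth (S k) y z) - f (pth k y z)) <= K * Rabs (y k - z k)).
      { rewrite E1. rewrite E2 at 2.
        apply (mvt_bound (fun t => f (setc (pth k y z) k t)) (fun t => Df k (setc (pth k y z) k t)) (z k) (y k) K).
        - intros t Ht. specialize (HD k (setc (pth k y z) k t) ltac:(lia)).
          rewrite setc_eq in HD.
          eapply derivable_pt_lim_ext; [|exact HD]. intros s. simpl. rewrite setc_setc. auto.
        - intros t Ht. apply HK. lia. apply Hin; auto. }
      specialize (IH ltac:(lia)). cbn [sum_upto]. unfold vsub at 2.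
      replace (f (pth (S k) y z) - f z) with ((f (pth (S k) y z) - f (pth k y z)) + (f (pth k y z) - f z)) by ring.
      eapply Rle_trans. apply Rabs_triang. lra. }
  specialize (Hind d (le_n d)).
  replace (f y) with (f (pth d y z)). exact Hind.
  apply Hdep. intros i Hi. unfold pth. assert (Nat.ltb i d = true) by (apply Nat.ltb_lt; auto). rewrite H. auto.
Qed.


Lemma contd_dep d f : contd d f -> depends_first d f.
Proof.
  intros Hc x y Hxy. destruct (Req_dec (f x) (f y)) as [E|E]; auto. exfalso.
  assert (Hp : 0 < Rabs (f x - f y)) by (apply Rabs_pos_lt; lra).
  destruct (Hc y _ Hp) as [del [Hd Hdel]].
  assert (vnorm d (vsub x y) = 0).
  { unfold vnorm. replace (sum_upto d (fun i => vsub x y i ^ 2)) with (sum_upto d (fun _ => 0)).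
    - replace (sum_upto d (fun _ : nat => 0)) with 0. apply sqrt_0. clear. induction d; cbn [sum_upto]; auto. rewrite <- IHd. ring.
    - apply sum_upto_ext. intros i Hi. unfold vsub. rewrite Hxy by auto. ring. }
  specialize (Hdel x ltac:(lra)). lra.
Qed.

Lemma fin_max (d : nat) (P : nat -> R -> Prop) :
  (forall j M M', P j M -> M <= M' -> P j M') ->
  (forall j, (j < d)%nat -> exists M, P j M) -> exists M, 0 <= M /\ forall j, (j < d)%nat -> P j M.
Proof.
  intros Hmono. induction d as [|d IH]; intros H.
  - exists 0. split. lra. intros; lia.
  - destruct IH as [M1 [HM1 H1]]. intros j Hj. apply H. lia.
    destruct (H d (Nat.lt_succ_diag_r d)) as [M2 H2].
    exists (Rmax M1 M2). split. eapply Rle_trans; [exact HM1|apply Rmax_l]. intros j Hj.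
    destruct (Nat.eq_dec j d).
    + subst. eapply Hmono. exact H2. apply Rmax_r.
    + eapply Hmono. apply H1. lia. apply Rmax_l.
Qed.

Definition cbox (Rb : R) : (nat -> R) * (nat -> R) := (fun _ => - Rb, fun _ => Rb).

Lemma cbox_valid d Rb : 0 <= Rb -> valid d (cbox Rb).
Proof. intros H i Hi. simpl. lra. Qed.

Lemma contd_bounded_box d f Rb : 0 <= Rb -> contd d f ->
  exists M, 0 <= M /\ forall y, inbox d (fun _ => - Rb) (fun _ => Rb) y -> Rabs (f y) <= M.
Proof.
  intros HR Hc. destruct (contd_bounded d f Hc (cbox Rb) (cbox_valid d Rb HR)) as [M HM].
  exists (Rmax M 0). split. apply Rmax_r. intros y Hy. eapply Rle_trans. apply HM. exact Hy. apply Rmax_l.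
Qed.

Lemma dpl_shift (F : R -> R) c t l : derivable_pt_lim F (c + t) l -> derivable_pt_lim (fun t => F (c + t)) t l.
Proof.
  intros H. replace l with (l * 1) by ring.
  apply (derivable_pt_lim_comp (fun t => c + t) F). 
  - replace 1 with (0 + 1) by ring. apply derivable_pt_lim_plus. apply derivable_pt_lim_const. apply derivable_pt_lim_id.
  - exact H.
Qed.

Lemma dpl_rshift (F : R -> R) c t l : derivable_pt_lim F (c - t) l -> derivable_pt_lim (fun t => F (c - t)) t (- l).
Proof.
  intros H. replace (- l) with (l * (-1)) by ring.
  apply (derivable_pt_lim_comp (fun t => c - t) F).
  - replace (-1) with (0 - 1) by ring. apply derivable_pt_lim_minus. apply derivable_pt_lim_const. apply derivable_pt_lim_id.
  - exact H.
Qed.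

Lemma sabs_ext d h g : (forall i, (i < d)%nat -> Rabs (h i) = Rabs (g i)) -> sabs d h = sabs d g.
Proof. intros H. unfold sabs. apply sum_upto_ext. auto. Qed.

Lemma second_diff d u Du x K2 (B : (nat -> R) -> Prop) h : 0 <= K2 ->
  depends_first d u ->
  (forall j y, (j < d)%nat -> derivable_pt_lim (fun t => u (setc y j t)) (y j) (Du j y)) ->
  (forall j y z, (j < d)%nat -> B y -> B z -> Rabs (Du j y - Du j z) <= K2 * sabs d (vsub y z)) ->
  (forall y, (forall i, (i < d)%nat -> Rabs (y i - x i) <= Rabs (h i)) -> B y) ->
  Rabs (u (vadd x h) - 2 * u x + u (vsub x h)) <= 2 * K2 * sabs d h ^ 2.
Proof.
  intros HK2 Hdep HD HL HB.
  set (SS := sabs d h). assert (HS : 0 <= SS) by apply sabs_ge0.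
  set (P := fun k => pth k (vadd x h) x). set (Q := fun k => pth k (vsub x h) x).
  assert (Hind : forall k, (k <= d)%nat ->
     Rabs ((u (P k) - u x) + (u (Q k) - u x)) <= 2 * K2 * SS * sum_upto k (fun j => Rabs (h j))).
  { induction k as [|k IH]; intros Hk.
    - assert (E1 : P 0%nat = x) by (apply functional_extensionality; intros i; reflexivity).
      assert (E2 : Q 0%nat = x) by (apply functional_extensionality; intros i; reflexivity).
      rewrite E1, E2. cbn [sum_upto]. replace (u x - u x + (u x - u x)) with 0 by ring. rewrite Rabs_R0. lra.
    - specialize (IH ltac:(lia)).
      assert (Hkd : (k < d)%nat) by lia.
      assert (EP1 : P (S k) = setc (P k) k (x k + h k)).
      { apply functional_extensionality. intros i. unfold P, pth, setc, vadd.
        destruct (Nat.eqb_spec i k); destruct (Nat.ltb_spec i (S k)); destruct (Nat.ltb_spec i k);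
          subst; auto; lia. }
      assert (EQ1 : Q (S k) = setc (Q k) k (x k - h k)).
      { apply functional_extensionality. intros i. unfold Q, pth, setc, vsub.
        destruct (Nat.eqb_spec i k); destruct (Nat.ltb_spec i (S k)); destruct (Nat.ltb_spec i k);
          subst; auto; lia. }
      assert (EP0 : P k = setc (P k) k (x k + 0)).
      { apply functional_extensionality. intros i. unfold P, pth, setc.
        destruct (Nat.eqb_spec i k); destruct (Nat.ltb_spec i k); subst; auto; try lia. ring. }
      assert (EQ0 : Q k = setc (Q k) k (x k - 0)).
      { apply functional_extensionality. intros i. unfold Q, pth, setc.
        destruct (Nat.eqb_spec i k); destruct (Nat.ltb_spec i k); subst; auto; try lia. ring. }
      set (Phi := fun t => u (setc (P k) k (x k + t)) + u (setc (Q k) k (x k - t))).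
      set (Phi' := fun t => Du k (setc (P k) k (x k + t)) - Du k (setc (Q k) k (x k - t))).
      assert (Hrange : forall t, Rmin 0 (h k) <= t <= Rmax 0 (h k) -> Rabs t <= Rabs (h k)).
      { intros t Ht. unfold Rmin, Rmax in Ht. destruct (Rle_dec 0 (h k)).
        rewrite !Rabs_right by lra. lra. rewrite Rabs_left1 with (a := h k) by lra.
        unfold Rabs. destruct (Rcase_abs t); lra. }
      assert (HPin : forall t, Rabs t <= Rabs (h k) -> B (setc (P k) k (x k + t))).
      { intros t Ht. apply HB. intros i Hi. unfold setc, P, pth, vadd.
        destruct (Nat.eqb_spec i k). replace (x k + t - x i) with t by (subst; ring). subst; auto.
        destruct (Nat.ltb i k). replace (x i + h i - x i) with (h i) by ring. lra.
        replace (x i - x i) with 0 by ring. rewrite Rabs_R0. apply Rabs_pos. }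
      assert (HQin : forall t, Rabs t <= Rabs (h k) -> B (setc (Q k) k (x k - t))).
      { intros t Ht. apply HB. intros i Hi. unfold setc, Q, pth, vsub.
        destruct (Nat.eqb_spec i k). replace (x k - t - x i) with (- t) by (subst; ring). rewrite Rabs_Ropp. subst; auto.
        destruct (Nat.ltb i k). replace (x i - h i - x i) with (- h i) by ring. rewrite Rabs_Ropp. lra.
        replace (x i - x i) with 0 by ring. rewrite Rabs_R0. apply Rabs_pos. }
      assert (Hmvt : Rabs (Phi (h k) - Phi 0) <= (2 * K2 * SS) * Rabs (h k - 0)).
      { apply mvt_bound with Phi'.
        - intros t Ht. unfold Phi, Phi'. unfold Rminus at 3. apply derivable_pt_lim_plus.
          + apply (dpl_shift (fun s => u (setc (P k) k s))).
            specialize (HD k (setc (P k) k (x k + t)) Hkd). rewrite setc_eq in HD.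
            eapply derivable_pt_lim_ext; [|exact HD]. intros s. simpl. rewrite setc_setc. auto.
          + apply (dpl_rshift (fun s => u (setc (Q k) k s))).
            specialize (HD k (setc (Q k) k (x k - t)) Hkd). rewrite setc_eq in HD.
            eapply derivable_pt_lim_ext; [|exact HD]. intros s. simpl. rewrite setc_setc. auto.
        - intros t Ht. specialize (Hrange t Ht). unfold Phi'.
          eapply Rle_trans. apply HL; auto.
          replace (2 * K2 * SS) with (K2 * (2 * SS)) by ring. apply Rmult_le_compat_l; auto.
          unfold SS, sabs. rewrite <- sum_upto_scal. apply sum_upto_le. intros i Hi.
          unfold vsub, setc, P, Q, pth, vadd, vsub.
          destruct (Nat.eqb_spec i k).
          + subst. replace (x k + t - (x k - t)) with (2 * t) by ring. rewrite Rabs_mult, Rabs_right by lra. lra.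
          + destruct (Nat.ltb i k).
            * replace (x i + h i - (x i - h i)) with (2 * h i) by ring. rewrite Rabs_mult, Rabs_right by lra. lra.
            * replace (x i - x i) with 0 by ring. rewrite Rabs_R0. pose proof (Rabs_pos (h i)). lra. }
      assert (EPhi1 : Phi (h k) = u (P (S k)) + u (Q (S k))) by (unfold Phi; rewrite EP1, EQ1; auto).
      assert (EPhi0 : Phi 0 = u (P k) + u (Q k)) by (unfold Phi; rewrite <- EP0, <- EQ0; auto).
      rewrite EPhi1, EPhi0 in Hmvt. replace (h k - 0) with (h k) in Hmvt by ring.
      cbn [sum_upto].
      replace (u (P (S k)) - u x + (u (Q (S k)) - u x)) with
        ((u (P (S k)) + u (Q (S k)) - (u (P k) + u (Q k))) + ((u (P k) - u x) + (u (Q k) - u x))) by ring.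
      eapply Rle_trans. apply Rabs_triang. lra. }
  specialize (Hind d (le_n d)).
  assert (E1 : u (P d) = u (vadd x h)).
  { apply Hdep. intros i Hi. unfold P, pth. assert (Nat.ltb i d = true) by (apply Nat.ltb_lt; auto). rewrite H. auto. }
  assert (E2 : u (Q d) = u (vsub x h)).
  { apply Hdep. intros i Hi. unfold Q, pth. assert (Nat.ltb i d = true) by (apply Nat.ltb_lt; auto). rewrite H. auto. }
  rewrite E1, E2 in Hind. fold (sabs d h) in Hind. fold SS in Hind.
  replace (u (vadd x h) - 2 * u x + u (vsub x h)) with (u (vadd x h) - u x + (u (vsub x h) - u x)) by ring.
  replace (2 * K2 * SS ^ 2) with (2 * K2 * SS * SS) by ring. auto.
Qed.

Lemma Rabs_le_between a b : Rabs a <= b -> - b <= a <= b.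
Proof. unfold Rabs. destruct (Rcase_abs a); intros; lra. Qed.

Lemma u_bounds d u x : Ccinf d u -> exists Mu K1 K2, 0 <= Mu /\ 0 <= K1 /\ 0 <= K2 /\
  (forall y, Rabs (u y) <= Mu) /\
  (forall h, vnorm d h < 1 -> Rabs (u (vadd x h) - u x) <= K1 * sabs d h) /\
  (forall h, vnorm d h < 1 -> Rabs (u (vadd x h) - 2 * u x + u (vsub x h)) <= 2 * K2 * sabs d h ^ 2).
Proof.
  intros [Hdep [Hcn [R0 HR]]].
  set (Rb := Rabs R0 + vnorm d x + 1).
  assert (HRb : 0 <= Rb) by (unfold Rb; pose proof (Rabs_pos R0); pose proof (vnorm_ge0 d x); lra).
  set (B := inbox d (fun _ => - Rb) (fun _ => Rb)).
  assert (Hnear : forall h y, vnorm d h < 1 -> (forall i, (i < d)%nat -> Rabs (y i - x i) <= Rabs (h i)) -> B y).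
  { intros h y Hh Hy i Hi. specialize (Hy i Hi). pose proof (coord_le_vnorm d h i Hi).
    pose proof (coord_le_vnorm d x i Hi).
    assert (Rabs (y i) <= Rabs (x i) + Rabs (y i - x i)).
    { replace (y i) with (x i + (y i - x i)) at 1 by ring. apply Rabs_triang. }
    pose proof (Rabs_pos R0). assert (Hyb : Rabs (y i) <= Rb) by (unfold Rb; lra).
    apply Rabs_le_between in Hyb. lra. }
  destruct (Hcn 2%nat) as [Hc0 [Du [HD HC1]]].
  destruct (contd_bounded_box d u Rb HRb Hc0) as [M [HM HMb]].
  assert (HMu : forall y, Rabs (u y) <= M).
  { intros y. destruct (classic (B y)) as [HB|HB]. apply HMb; auto.
    unfold B, inbox in HB. apply not_all_ex_not in HB. destruct HB as [i Hi].
    apply imply_to_and in Hi. destruct Hi as [Hi Hn].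
    assert (Rb < Rabs (y i)).
    { destruct (Rle_dec (Rabs (y i)) Rb) as [Hle|Hlt]; [|lra]. exfalso. apply Hn.
      apply Rabs_le_between in Hle. auto. }
    pose proof (coord_le_vnorm d y i Hi). pose proof (Rle_abs R0). pose proof (vnorm_ge0 d x).
    rewrite HR. rewrite Rabs_R0. auto. unfold Rb in H. lra. }
  destruct (fin_max d (fun j K => forall y, B y -> Rabs (Du j y) <= K)) as [K1 [HK1 HK1b]].
  { intros j K K' H HKK y Hy. eapply Rle_trans. apply H; auto. auto. }
  { intros j Hj. destruct (HC1 j Hj) as [Hcj _].
    destruct (contd_bounded_box d (Du j) Rb HRb Hcj) as [Mj [_ HMj]]. exists Mj. auto. }
  destruct (fin_max d (fun i L => forall y z, B y -> B z -> Rabs (Du i y - Du i z) <= L * sabs d (vsub y z)))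
    as [K2 [HK2 HK2b]].
  { intros j K K' H HKK y z Hy Hz. eapply Rle_trans. apply H; auto.
    apply Rmult_le_compat_r; auto. apply sabs_ge0. }
  { intros i Hi. destruct (HC1 i Hi) as [Hci [D2 [HD2 HC2]]].
    destruct (fin_max d (fun j K => forall y, B y -> Rabs (D2 j y) <= K)) as [L [HL HLb]].
    { intros j K K' H HKK y Hy. eapply Rle_trans. apply H; auto. auto. }
    { intros j Hj. destruct (HC2 j Hj) as [Hcj _].
      destruct (contd_bounded_box d (D2 j) Rb HRb Hcj) as [Mj [_ HMj]]. exists Mj. auto. }
    exists L. intros y z Hy Hz.
    apply (lip d (Du i) D2 (fun _ => - Rb) (fun _ => Rb) L); auto.
    apply contd_dep; auto. }
  exists M, K1, K2. split; auto. split; auto. split; auto. split; auto. split.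
  - intros h Hh.
    replace (sabs d h) with (sabs d (vsub (vadd x h) x)).
    + assert (H1 : B (vadd x h)).
      { apply (Hnear h). auto. intros i Hi. unfold vadd. replace (x i + h i - x i) with (h i) by ring. lra. }
      assert (H2 : B x).
      { apply (Hnear h). auto. intros i Hi. replace (x i - x i) with 0 by ring. rewrite Rabs_R0. apply Rabs_pos. }
      exact (lip d u Du (fun _ => - Rb) (fun _ => Rb) K1 Hdep HD (fun j y Hj Hy => HK1b j Hj y Hy) (vadd x h) x H1 H2).
    + apply sabs_ext. intros i Hi. unfold vsub, vadd. f_equal. ring.
  - intros h Hh. apply (second_diff d u Du x K2 B h); auto.
    intros y Hy. apply (Hnear h); auto.
Qed.


Lemma exp_mono a b : a <= b -> exp a <= exp b.
Proof. intros H. destruct (Req_dec a b). subst; lra. left. apply exp_increasing. lra. Qed.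

Lemma ln_mono a b : 0 < a -> a <= b -> ln a <= ln b.
Proof. intros H1 H2. destruct (Req_dec a b). subst; lra. left. apply ln_increasing; lra. Qed.

Lemma Rpower_exp_anti r y1 y2 : 0 < r < 1 -> y2 <= y1 -> Rpower r y1 <= Rpower r y2.
Proof.
  intros Hr Hy. unfold Rpower. apply exp_mono.
  assert (ln r < 0) by (rewrite <- ln_1; apply ln_increasing; lra). nra.
Qed.

Lemma Rpower_base_anti a r e : 0 < a <= r -> e <= 0 -> Rpower r e <= Rpower a e.
Proof.
  intros Ha He. unfold Rpower. apply exp_mono.
  assert (ln a <= ln r) by (apply ln_mono; lra). nra.
Qed.

Lemma Rpower_ge1 a e : 0 < a <= 1 -> e <= 0 -> 1 <= Rpower a e.
Proof.
  intros Ha He. unfold Rpower. rewrite <- exp_0. apply exp_mono.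
  assert (ln a <= 0) by (rewrite <- ln_1; apply ln_mono; lra). nra.
Qed.

Lemma Rpower_pow_mult r y n : 0 < r -> Rpower r y ^ n = Rpower r (y * INR n).
Proof.
  intros Hr. rewrite <- Rpower_pow by (apply Rpower_pos). rewrite Rpower_mult. auto.
Qed.

Lemma prod_ge k f c : 0 <= c -> (forall i, (i < k)%nat -> c <= f i) -> c ^ k <= prod_upto k f.
Proof.
  induction k; intros Hc H; simpl; [lra|].
  assert (c ^ k <= prod_upto k f) by (apply IHk; auto; intros; apply H; lia).
  assert (c <= f k) by (apply H; lia). pose proof (pow_le c k Hc).
  rewrite Rmult_comm. apply Rmult_le_compat; auto.
Qed.

Section Maj.
Variable d : nat.
Variable beta : R.
Hypothesis Hd : (1 <= d)%nat.
Hypothesis Hb : 0 < beta < 2.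

Definition pp := INR d + beta.
Definition al := Rmax ((pp - 2) / INR d) 0.
Definition bl := pp / INR d.

Lemma INR_d_pos : 0 < INR d.
Proof. apply lt_0_INR. lia. Qed.

Lemma al_prop : 0 <= al < 1.
Proof.
  pose proof INR_d_pos. unfold al. split. apply Rmax_r. apply Rmax_lub_lt; [|lra].
  unfold pp. apply Rmult_lt_reg_r with (INR d); auto. unfold Rdiv. rewrite Rmult_assoc, Rinv_l by lra. lra.
Qed.

Lemma bl_prop : 1 < bl.
Proof.
  pose proof INR_d_pos. unfold bl, pp.
  apply Rmult_lt_reg_r with (INR d); auto. unfold Rdiv. rewrite Rmult_assoc, Rinv_l by lra. lra.
Qed.

Definition psi (r : R) : R := if Rlt_dec r 1 then Rpower r (- al) else Rpower r (- bl).
Definition wf (r : R) : R := (if Rlt_dec r 1 then r ^ 2 else 1) / Rpower r pp.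

Lemma phi_ge_psi r t : t <> 0 -> Rabs t <= r -> psi r <= phi al bl t.
Proof.
  intros Ht Htr. pose proof al_prop. pose proof bl_prop. pose proof (Rabs_pos_lt t Ht).
  unfold psi, phi. destruct (Rlt_dec r 1); destruct (Rlt_dec (Rabs t) 1).
  - apply Rpower_base_anti; lra.
  - lra.
  - apply Rle_trans with 1. apply Rpower_le1b; lra. apply Rpower_ge1; lra.
  - apply Rpower_base_anti; lra.
Qed.

Lemma w_le_psi r : 0 < r -> wf r <= psi r ^ d.
Proof.
  intros Hr. pose proof INR_d_pos. pose proof al_prop. pose proof bl_prop.
  unfold wf, psi.
  destruct (Rlt_dec r 1); rewrite Rpower_pow_mult by auto;
  unfold Rdiv; rewrite <- Rpower_Ropp.
  - replace (r ^ 2) with (Rpower r 2) by (replace 2 with (INR 2) by (simpl; ring); apply Rpower_pow; auto).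
    rewrite <- Rpower_plus. apply Rpower_exp_anti. lra.
    assert (al * INR d >= pp - 2).
    { unfold al. apply Rle_ge. apply Rle_trans with ((pp - 2) / INR d * INR d).
      right. field. lra. apply Rmult_le_compat_r. lra. apply Rmax_l. }
    lra.
  - rewrite Rmult_1_l. right. f_equal. unfold bl. field. lra.
Qed.

Lemma w_le_prod h : (forall i, (i < d)%nat -> h i <> 0) ->
  wf (vnorm d h) <= prod_upto d (fun i => phi al bl (h i)).
Proof.
  intros Hh. assert (Hr : 0 < vnorm d h) by (apply (vnorm_pos d h 0); [lia|apply Hh; lia]).
  eapply Rle_trans. apply w_le_psi; auto.
  apply prod_ge.
  - unfold psi. destruct (Rlt_dec (vnorm d h) 1); left; apply Rpower_pos.
  - intros i Hi. apply phi_ge_psi. apply Hh; auto. apply coord_le_vnorm; auto.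
Qed.

Lemma bound_of_majorant f Kc : 0 <= Kc ->
  (forall h, (forall i, (i < d)%nat -> h i <> 0) -> f h <= Kc * wf (vnorm d h)) ->
  bound (lower_sums d f).
Proof.
  intros HK Hf. pose proof al_prop. pose proof bl_prop.
  assert (HJ : 0 < Jc al bl).
  { unfold Jc. assert (0 < / (1 - al)) by (apply Rinv_0_lt_compat; lra).
    assert (0 < / (bl - 1)) by (apply Rinv_0_lt_compat; lra). lra. }
  exists (Kc * (2 * Jc al bl) ^ d). intros v [l [[HF Hv] ->]].
  apply (prod_bound (phi al bl) (2 * Jc al bl)).
  - intros t. unfold phi. destruct (Rlt_dec (Rabs t) 1); left; apply Rpower_pos.
  - lra.
  - intros M l1 HM HF1 Hs. replace (M * (2 * Jc al bl)) with (M * Jc al bl + M * Jc al bl) by ring.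
    apply full1 with (phi al bl); auto. apply phi_even. apply phi_int; auto.
  - auto.
  - exact HF.
  - intros x Hx. eapply Rle_trans. apply Hv. eapply Rle_trans. apply Hf; auto.
    apply Rmult_le_compat_l; auto. apply w_le_prod; auto.
Qed.

End Maj.


Definition FA (d : nat) (beta : R) (u : (nat -> R) -> R) (x h : nat -> R) : R :=
  (u (vadd x h) - 2 * u x + u (vsub x h)) / Rpower (vnorm d h) (INR d + beta).
Definition FD (d : nat) (beta : R) (u : (nat -> R) -> R) (x h : nat -> R) : R :=
  (u (vadd x h) - u x) ^ 2 / Rpower (vnorm d h) (INR d + beta).
Definition FC (d : nat) (beta : R) (u : (nat -> R) -> R) (x w : nat -> R) : R :=
    let h := w in let s := fun i => w (d + i)%nat in
    (u (vadd (vadd x h) s) - u (vadd x h) - u (vadd x s) + u x) ^ 2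
    / (Rpower (vnorm d h) (INR d + beta) * Rpower (vnorm d s) (INR d + beta)).

Lemma Lop_eq d beta u x : Lop d beta u x =
  cbd beta d * (lint d (fun h => Rmax (FA d beta u x h) 0) - lint d (fun h => Rmax (- FA d beta u x h) 0)).
Proof. reflexivity. Qed.
Lemma GammaOp_eq d beta u x : GammaOp d beta u x = cbd beta d * lint d (FD d beta u x).
Proof. reflexivity. Qed.
Lemma Gamma2Op_eq d beta u x : Gamma2Op d beta u x = cbd beta d ^ 2 * lint (d + d) (FC d beta u x).
Proof. reflexivity. Qed.

Lemma sc_vadd lam x h : lam <> 0 -> sc lam (vadd (sc (/ lam) x) h) = vadd x (sc lam h).
Proof. intros H. apply functional_extensionality. intros i. unfold sc, vadd. field. auto. Qed.
Lemma sc_vsub lam x h : lam <> 0 -> sc lam (vsub (sc (/ lam) x) h) = vsub x (sc lam h).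
Proof. intros H. apply functional_extensionality. intros i. unfold sc, vsub. field. auto. Qed.
Lemma sc_vadd2 lam x h s : lam <> 0 -> sc lam (vadd (vadd (sc (/ lam) x) h) s) = vadd (vadd x (sc lam h)) (sc lam s).
Proof. intros H. apply functional_extensionality. intros i. unfold sc, vadd. field. auto. Qed.

Lemma dep_zero d u x h : depends_first d u -> vnorm d h = 0 -> u (vadd x h) = u x /\ u (vsub x h) = u x.
Proof.
  intros Hdep H. split; apply Hdep; intros i Hi; unfold vadd, vsub; rewrite (vnorm0_coords d h H i Hi); ring.
Qed.

Lemma dep_zero2 d u x h s : depends_first d u -> vnorm d h = 0 -> u (vadd (vadd x h) s) = u (vadd x s).
Proof.
  intros Hdep H. apply Hdep; intros i Hi; unfold vadd; rewrite (vnorm0_coords d h H i Hi); ring.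
Qed.

Lemma dep_zero3 d u y s : depends_first d u -> vnorm d s = 0 -> u (vadd y s) = u y.
Proof.
  intros Hdep H. apply Hdep; intros i Hi; unfold vadd; rewrite (vnorm0_coords d s H i Hi); ring.
Qed.

Lemma Rpower_sc lam r p : 0 < lam -> 0 < r -> Rpower (lam * r) p = Rpower lam p * Rpower r p.
Proof. intros. rewrite Rpower_mult_distr; auto. Qed.

Lemma FA_scale d beta u x lam h : 0 < lam -> depends_first d u ->
  FA d beta (fun y => u (sc lam y)) (sc (/ lam) x) h = Rpower lam (INR d + beta) * FA d beta u x (sc lam h).
Proof.
  intros Hl Hdep. unfold FA. cbv beta.
  rewrite sc_vadd, sc_vsub, sc_sc by lra. rewrite vnorm_sc by auto.
  destruct (vnorm_ge0 d h) as [Hr|Hr].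
  - rewrite Rpower_sc by auto. pose proof (Rpower_pos lam (INR d + beta)). pose proof (Rpower_pos (vnorm d h) (INR d + beta)).
    field. lra.
  - symmetry in Hr. assert (Hr' : vnorm d (sc lam h) = 0) by (rewrite vnorm_sc, Hr by auto; ring).
    destruct (dep_zero d u x (sc lam h) Hdep Hr') as [E1 E2]. rewrite E1, E2.
    unfold Rdiv. ring.
Qed.

Lemma FD_scale d beta u x lam h : 0 < lam -> depends_first d u ->
  FD d beta (fun y => u (sc lam y)) (sc (/ lam) x) h = Rpower lam (INR d + beta) * FD d beta u x (sc lam h).
Proof.
  intros Hl Hdep. unfold FD. cbv beta.
  rewrite sc_vadd, sc_sc by lra. rewrite vnorm_sc by auto.
  destruct (vnorm_ge0 d h) as [Hr|Hr].
  - rewrite Rpower_sc by auto. pose proof (Rpower_pos lam (INR d + beta)). pose proof (Rpower_pos (vnorm d h) (INR d + beta)).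
    field. lra.
  - symmetry in Hr. assert (Hr' : vnorm d (sc lam h) = 0) by (rewrite vnorm_sc, Hr by auto; ring).
    destruct (dep_zero d u x (sc lam h) Hdep Hr') as [E1 E2]. rewrite E1.
    unfold Rdiv. ring.
Qed.

Lemma FC_scale d beta u x lam w : 0 < lam -> depends_first d u ->
  FC d beta (fun y => u (sc lam y)) (sc (/ lam) x) w =
  (Rpower lam (INR d + beta) * Rpower lam (INR d + beta)) * FC d beta u x (sc lam w).
Proof.
  intros Hl Hdep. unfold FC. cbv beta zeta.
  set (s := fun i => w (d + i)%nat).
  change (fun i => sc lam w (d + i)%nat) with (sc lam s).
  rewrite sc_vadd2, sc_vadd, sc_vadd, sc_sc by lra. rewrite !vnorm_sc by auto.
  destruct (vnorm_ge0 d w) as [Hr|Hr]; destruct (vnorm_ge0 d s) as [Hs|Hs].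
  - rewrite !Rpower_sc by auto. pose proof (Rpower_pos lam (INR d + beta)).
    pose proof (Rpower_pos (vnorm d w) (INR d + beta)). pose proof (Rpower_pos (vnorm d s) (INR d + beta)).
    field. split; lra.
  - symmetry in Hs. assert (Hr' : vnorm d (sc lam s) = 0) by (rewrite vnorm_sc, Hs by auto; ring).
    destruct (dep_zero d u x (sc lam s) Hdep Hr') as [E1 E2].
    rewrite (dep_zero3 d u (vadd x (sc lam w)) (sc lam s) Hdep Hr'), E1. unfold Rdiv. ring.
  - symmetry in Hr. assert (Hr' : vnorm d (sc lam w) = 0) by (rewrite vnorm_sc, Hr by auto; ring).
    destruct (dep_zero d u x (sc lam w) Hdep Hr') as [E1 E2].
    rewrite (dep_zero2 d u x (sc lam w) (sc lam s) Hdep Hr'), E1. unfold Rdiv. ring.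
  - symmetry in Hr. assert (Hr' : vnorm d (sc lam w) = 0) by (rewrite vnorm_sc, Hr by auto; ring).
    destruct (dep_zero d u x (sc lam w) Hdep Hr') as [E1 E2].
    rewrite (dep_zero2 d u x (sc lam w) (sc lam s) Hdep Hr'), E1. unfold Rdiv. ring.
Qed.

Lemma bound_dim0 f : bound (lower_sums 0 f).
Proof.
  exists (f (fun _ => 0)). intros v [l [[HF Hv] ->]]. rewrite (step_int0 l (fun _ => 0)). apply Hv.
Qed.

Lemma rmax_div_bound num P Kc q : 0 < P -> Rabs num <= Kc * q ->
  Rmax (num / P) 0 <= Kc * (q / P) /\ Rmax (- (num / P)) 0 <= Kc * (q / P).
Proof.
  intros HP Hn.
  assert (Habs : Rabs (num / P) <= Kc * (q / P)).
  { unfold Rdiv. rewrite Rabs_mult. rewrite Rabs_right with (r := / P) by (left; apply Rinv_0_lt_compat; auto).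
    rewrite <- Rmult_assoc. apply Rmult_le_compat_r. left; apply Rinv_0_lt_compat; auto. auto. }
  pose proof (Rabs_pos (num / P)). pose proof (Rle_abs (num / P)). pose proof (Rle_abs (- (num / P))).
  rewrite Rabs_Ropp in H1.
  split; apply Rmax_lub; lra.
Qed.

Lemma abs3 a b c : Rabs (a - 2 * b + c) <= Rabs a + 2 * Rabs b + Rabs c.
Proof. unfold Rabs. destruct (Rcase_abs (a - 2 * b + c)); destruct (Rcase_abs a);
  destruct (Rcase_abs b); destruct (Rcase_abs c); lra. Qed.

Lemma bounds_ABD d beta u x : 0 < beta < 2 -> Ccinf d u ->
  bound (lower_sums d (fun h => Rmax (FA d beta u x h) 0)) /\
  bound (lower_sums d (fun h => Rmax (- FA d beta u x h) 0)) /\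
  bound (lower_sums d (FD d beta u x)).
Proof.
  intros Hb Hu. destruct d as [|d'].
  { split; [|split]; apply bound_dim0. }
  set (d := S d'). assert (Hd : (1 <= d)%nat) by (unfold d; lia).
  destruct (u_bounds d u x Hu) as [Mu [K1 [K2 [HMu [HK1 [HK2 [Hu0 [Hu1 Hu2]]]]]]]].
  pose proof (pos_INR d) as Hdpos.
  set (Kc := 2 * K2 * INR d ^ 2 + 4 * Mu).
  assert (HKc : 0 <= Kc) by (unfold Kc; pose proof (pow2_ge_0 (INR d)); nra).
  assert (Hnum : forall h, 0 < vnorm d h ->
     Rabs (u (vadd x h) - 2 * u x + u (vsub x h)) <= Kc * (if Rlt_dec (vnorm d h) 1 then vnorm d h ^ 2 else 1)).
  { intros h Hr. destruct (Rlt_dec (vnorm d h) 1) as [Hlt|Hge].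
    - eapply Rle_trans. apply Hu2; auto.
      pose proof (sabs_le_vnorm d h). pose proof (sabs_ge0 d h).
      assert (sabs d h ^ 2 <= (INR d * vnorm d h) ^ 2) by (apply pow_incr; lra).
      unfold Kc. pose proof (pow2_ge_0 (vnorm d h)).
      assert (2 * K2 * sabs d h ^ 2 <= 2 * K2 * (INR d * vnorm d h) ^ 2) by (apply Rmult_le_compat_l; lra).
      replace ((INR d * vnorm d h) ^ 2) with (INR d ^ 2 * vnorm d h ^ 2) in H2 by ring. nra.
    - rewrite Rmult_1_r. unfold Kc.
      pose proof (Hu0 (vadd x h)). pose proof (Hu0 x). pose proof (Hu0 (vsub x h)).
      pose proof (abs3 (u (vadd x h)) (u x) (u (vsub x h))).
      assert (0 <= 2 * K2 * INR d ^ 2) by (pose proof (pow2_ge_0 (INR d)); nra).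
      lra. }
  set (Kd := K1 ^ 2 * INR d ^ 2 + 4 * Mu ^ 2).
  assert (HKd : 0 <= Kd) by (unfold Kd; pose proof (pow2_ge_0 (INR d)); pose proof (pow2_ge_0 K1); pose proof (pow2_ge_0 Mu); nra).
  assert (Hnum2 : forall h, 0 < vnorm d h ->
     (u (vadd x h) - u x) ^ 2 <= Kd * (if Rlt_dec (vnorm d h) 1 then vnorm d h ^ 2 else 1)).
  { intros h Hr. destruct (Rlt_dec (vnorm d h) 1) as [Hlt|Hge].
    - pose proof (Hu1 h Hlt) as H1. pose proof (sabs_le_vnorm d h). pose proof (sabs_ge0 d h).
      assert (Rabs (u (vadd x h) - u x) <= K1 * INR d * vnorm d h).
      { eapply Rle_trans. exact H1. rewrite Rmult_assoc. apply Rmult_le_compat_l; auto. }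
      rewrite <- Rsqr_pow2 with (x := u (vadd x h) - u x). rewrite Rsqr_abs. rewrite Rsqr_pow2.
      assert (Rabs (u (vadd x h) - u x) ^ 2 <= (K1 * INR d * vnorm d h) ^ 2) by (apply pow_incr; split; [apply Rabs_pos|auto]).
      unfold Kd. pose proof (pow2_ge_0 (vnorm d h)). pose proof (pow2_ge_0 Mu).
      replace ((K1 * INR d * vnorm d h) ^ 2) with (K1 ^ 2 * INR d ^ 2 * vnorm d h ^ 2) in H4 by ring. nra.
    - rewrite Rmult_1_r. unfold Kd.
      pose proof (Hu0 (vadd x h)). pose proof (Hu0 x).
      assert (Rabs (u (vadd x h) - u x) <= 2 * Mu).
      { unfold Rminus. eapply Rle_trans. apply Rabs_triang. rewrite Rabs_Ropp. lra. }
      rewrite <- Rsqr_pow2 with (x := u (vadd x h) - u x). rewrite Rsqr_abs. rewrite Rsqr_pow2.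
      assert (Rabs (u (vadd x h) - u x) ^ 2 <= (2 * Mu) ^ 2) by (apply pow_incr; split; [apply Rabs_pos|auto]).
      pose proof (pow2_ge_0 K1). pose proof (pow2_ge_0 (INR d)). nra. }
  split; [|split].
  - apply (bound_of_majorant d beta Hd Hb _ Kc HKc). intros h Hh.
    assert (Hr : 0 < vnorm d h) by (apply (vnorm_pos d h 0); [lia|apply Hh; lia]).
    unfold FA, wf, pp. apply rmax_div_bound. apply Rpower_pos. apply Hnum; auto.
  - apply (bound_of_majorant d beta Hd Hb _ Kc HKc). intros h Hh.
    assert (Hr : 0 < vnorm d h) by (apply (vnorm_pos d h 0); [lia|apply Hh; lia]).
    unfold FA, wf, pp. apply rmax_div_bound. apply Rpower_pos. apply Hnum; auto.
  - apply (bound_of_majorant d beta Hd Hb _ Kd HKd). intros h Hh.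
    assert (Hr : 0 < vnorm d h) by (apply (vnorm_pos d h 0); [lia|apply Hh; lia]).
    unfold FD, wf, pp. unfold Rdiv. rewrite <- Rmult_assoc. apply Rmult_le_compat_r.
    left; apply Rinv_0_lt_compat; apply Rpower_pos. apply Hnum2; auto.
Qed.


Lemma fin_A X Y Z : (forall s, 0 < s -> X * s ^ 2 <= Y * s ^ 2 + Z * s) -> X <= Y.
Proof.
  intros H. destruct (Rle_dec X Y) as [|Hn]; auto. exfalso. apply Rnot_le_lt in Hn.
  set (s := (Rabs Z + 1) / (X - Y)).
  assert (Hs : 0 < s) by (unfold s; apply Rdiv_lt_0_compat; [pose proof (Rabs_pos Z)|]; lra).
  specialize (H s Hs).
  assert (H1 : (X - Y) * s * s <= Z * s) by (simpl in H; nra).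
  assert (H2 : (X - Y) * s <= Z) by (apply Rmult_le_reg_r with s; auto).
  assert (E : (X - Y) * s = Rabs Z + 1) by (unfold s; field; lra).
  pose proof (Rle_abs Z). lra.
Qed.

Lemma fin_B X E Z : 0 <= X -> (forall s, 0 < s -> X * s ^ 2 <= E + Z * s) -> X <= E.
Proof.
  intros HX H.
  assert (HX0 : X = 0).
  { destruct HX as [HX|HX]; auto. exfalso.
    set (s := (Rabs E + Rabs Z + 1) / X + 1).
    assert (Hq : 0 < (Rabs E + Rabs Z + 1) / X) by (apply Rdiv_lt_0_compat; [pose proof (Rabs_pos E); pose proof (Rabs_pos Z)|]; lra).
    assert (Hs : 1 <= s) by (unfold s; lra).
    specialize (H s ltac:(lra)).
    assert (Es : X * s = Rabs E + Rabs Z + 1 + X) by (unfold s; field; lra).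
    assert (H1 : X * s ^ 2 = (X * s) * s) by ring.
    pose proof (Rle_abs E). pose proof (Rle_abs Z). pose proof (Rabs_pos E). pose proof (Rabs_pos Z).
    assert (Rabs E * 1 <= Rabs E * s) by (apply Rmult_le_compat_l; lra).
    assert (Z * s <= Rabs Z * s) by (apply Rmult_le_compat_r; lra).
    nra. }
  subst. destruct (Rle_dec 0 E) as [|Hn]; auto. exfalso. apply Rnot_le_lt in Hn.
  set (s := - E / (2 * (Rabs Z + 1))).
  assert (Hs : 0 < s) by (unfold s; apply Rdiv_lt_0_compat; [|pose proof (Rabs_pos Z)]; lra).
  specialize (H s Hs).
  assert (Es : (Rabs Z + 1) * s = - E / 2) by (unfold s; field; pose proof (Rabs_pos Z); lra).
  assert (Z * s <= Rabs Z * s) by (apply Rmult_le_compat_r; [lra|apply Rle_abs]).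
  nra.
Qed.

Lemma ls_nil n f : (forall h, 0 <= f h) -> lower_sums n f 0.
Proof. intros H. exists nil. split; [split|]; simpl; auto. Qed.

Lemma Rmax_scale k y : 0 < k -> Rmax (k * y) 0 = k * Rmax y 0.
Proof. intros Hk. unfold Rmax. destruct (Rle_dec (k * y) 0); destruct (Rle_dec y 0); try ring; nra. Qed.

Lemma kfac d beta lam : 0 < lam -> Rpower lam (INR d + beta) * (/ lam) ^ d = Rpower lam beta.
Proof.
  intros Hl. rewrite Rpower_plus, Rpower_pow by auto.
  replace (lam ^ d * Rpower lam beta * (/ lam) ^ d) with ((lam * / lam) ^ d * Rpower lam beta)
    by (rewrite Rpow_mult_distr; ring).
  rewrite Rinv_r by lra. rewrite pow1. ring.
Qed.

Theorem proposition2p3 (beta kappa N : R) (d : nat)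
  (hbeta : 0 < beta < 2) (hN : 0 < N)
  (hCD : forall u, Ccinf d u -> forall x : nat -> R,
     / N * (Lop d beta u x) ^ 2 <= Gamma2Op d beta u x + kappa * GammaOp d beta u x) :
  forall u, Ccinf d u -> forall x : nat -> R,
     / N * (Lop d beta u x) ^ 2 <= Gamma2Op d beta u x.
Proof.
  intros u Hu x.
  destruct (bounds_ABD d beta u x hbeta Hu) as [bA [bB bD]].
  assert (Hdep : depends_first d u) by apply Hu.
  set (c := cbd beta d).
  set (fA := fun h => Rmax (FA d beta u x h) 0).
  set (fB := fun h => Rmax (- FA d beta u x h) 0).
  set (fD := FD d beta u x). set (fC := FC d beta u x).
  assert (nA : exists v, lower_sums d fA v) by (exists 0; apply ls_nil; intros; apply Rmax_r).
  assert (nB : exists v, lower_sums d fB v) by (exists 0; apply ls_nil; intros; apply Rmax_r).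
  assert (nD : exists v, lower_sums d fD v).
  { exists 0; apply ls_nil; intros h. unfold fD, FD. unfold Rdiv. apply Rmult_le_pos. apply pow2_ge_0.
    left; apply Rinv_0_lt_compat; apply Rpower_pos. }
  assert (nC : exists v, lower_sums (d + d) fC v).
  { exists 0; apply ls_nil; intros h. unfold fC, FC. unfold Rdiv. apply Rmult_le_pos. apply pow2_ge_0.
    left; apply Rinv_0_lt_compat; apply Rmult_lt_0_compat; apply Rpower_pos. }
  set (LA := lint d fA). set (LB := lint d fB). set (LD := lint d fD). set (LC := lint (d + d) fC).
  assert (Key : forall lam, 0 < lam ->
    / N * (c * (Rpower lam beta * LA - Rpower lam beta * LB)) ^ 2 <=
    c ^ 2 * (if excluded_middle_informative (bound (lower_sums (d + d) fC)) then Rpower lam beta ^ 2 * LC else LC)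
    + kappa * (c * (Rpower lam beta * LD))).
  { intros lam Hl.
    set (k := Rpower lam (INR d + beta)).
    assert (Hk : 0 < k) by apply Rpower_pos.
    specialize (hCD (fun y => u (sc lam y)) (Ccinf_scale d lam u Hl Hu) (sc (/ lam) x)).
    rewrite Lop_eq, Gamma2Op_eq, GammaOp_eq in hCD.
    assert (EA : (fun h => Rmax (FA d beta (fun y => u (sc lam y)) (sc (/ lam) x) h) 0) = (fun h => k * fA (sc lam h))).
    { apply functional_extensionality. intros h. rewrite FA_scale by auto. apply Rmax_scale; auto. }
    assert (EB : (fun h => Rmax (- FA d beta (fun y => u (sc lam y)) (sc (/ lam) x) h) 0) = (fun h => k * fB (sc lam h))).
    { apply functional_extensionality. intros h. rewrite FA_scale by auto. unfold fB.
      rewrite <- Rmax_scale by auto. apply (f_equal (fun z => Rmax z 0)). unfold k. ring. }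
    assert (ED : FD d beta (fun y => u (sc lam y)) (sc (/ lam) x) = (fun h => k * fD (sc lam h))).
    { apply functional_extensionality. intros h. rewrite FD_scale by auto. reflexivity. }
    assert (EC : FC d beta (fun y => u (sc lam y)) (sc (/ lam) x) = (fun h => (k * k) * fC (sc lam h))).
    { apply functional_extensionality. intros h. rewrite FC_scale by auto. reflexivity. }
    rewrite EA, EB, ED, EC in hCD.
    rewrite (lint_scale_b d fA k lam Hk Hl bA nA) in hCD.
    rewrite (lint_scale_b d fB k lam Hk Hl bB nB) in hCD.
    rewrite (lint_scale_b d fD k lam Hk Hl bD nD) in hCD.
    assert (Ek : k * (/ lam) ^ d = Rpower lam beta) by (apply kfac; auto).
    rewrite Ek in hCD. fold LA LB LD in hCD.
    destruct (excluded_middle_informative (bound (lower_sums (d + d) fC))) as [bC|bC].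
    - rewrite (lint_scale_b (d + d) fC (k * k) lam ltac:(nra) Hl bC nC) in hCD.
      replace (k * k * (/ lam) ^ (d + d)) with (Rpower lam beta ^ 2) in hCD
        by (rewrite pow_add, <- Ek; ring).
      exact hCD.
    - rewrite (lint_scale_u (d + d) fC (k * k) lam ltac:(nra) Hl bC) in hCD. exact hCD. }
  assert (Hs : forall s, 0 < s -> exists lam, 0 < lam /\ Rpower lam beta = s).
  { intros s Hs. exists (Rpower s (/ beta)). split. apply Rpower_pos.
    rewrite Rpower_mult. rewrite Rinv_l by lra. apply Rpower_1; auto. }
  rewrite Lop_eq, Gamma2Op_eq. fold c. fold fA fB fC. fold LA LB LC.
  set (X := / N * (c * (LA - LB)) ^ 2).
  assert (HX : 0 <= X).
  { unfold X. apply Rmult_le_pos. left; apply Rinv_0_lt_compat; auto. apply pow2_ge_0. }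
  destruct (excluded_middle_informative (bound (lower_sums (d + d) fC))) as [bC|bC].
  - apply (fin_A X (c ^ 2 * LC) (kappa * c * LD)). intros s Hs0.
    destruct (Hs s Hs0) as [lam [Hl Hls]]. specialize (Key lam Hl).
    destruct (excluded_middle_informative (bound (lower_sums (d + d) fC))); [|contradiction].
    rewrite Hls in Key. unfold X. 
    replace (/ N * (c * (s * LA - s * LB)) ^ 2) with (/ N * (c * (LA - LB)) ^ 2 * s ^ 2) in Key by ring.
    lra.
  - apply (fin_B X (c ^ 2 * LC) (kappa * c * LD) HX). intros s Hs0.
    destruct (Hs s Hs0) as [lam [Hl Hls]]. specialize (Key lam Hl).
    destruct (excluded_middle_informative (bound (lower_sums (d + d) fC))); [contradiction|].
    rewrite Hls in Key. unfold X.
    replace (/ N * (c * (s * LA - s * LB)) ^ 2) with (/ N * (c * (LA - LB)) ^ 2 * s ^ 2) in Key by ring.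
    lra.
Qed.
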